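(* Assume (A1), (A3) and the additivity condition (Add). Define $\hat f(x,\alpha):=f(x,0)+\sum_{i=1}^m\alpha_i\big(f(x,\mathbf 1_i)-f(x,0)\big)$ and $\hat r(x,\alpha):=r(x,0)+\sum_{i=1}^m\alpha_i\big(r(x,\mathbf 1_i)-r(x,0)\big)$ for $x\in\mathbb R^n$, $\alpha\in\mathbb R^m$, and the reformulated payoff $\hat J(\alpha):=\int_0^T\hat r(y^\alpha(t),\alpha)dt+q(y^\alpha(T))$, where $y^\alpha$ solves $\dot y(t)=\hat f(y(t),\alpha)$, $y(0)=\mathbf x$. If $\hat J$ is concave on $[0,1]^m$, then for every $\bar\alpha\in\{0,1\}^m$, $$D^{NS}J(\bar\alpha)^\top(\alpha-\bar\alpha)\ge J(\alpha)-J(\bar\alpha)\quad\text{for all }\alpha\in\{0,1\}^m.$$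
   Context: Fix $n,m\ge1$, $T>0$, $\mathcal X\subseteq\mathbb R^n$, $\mathbf x\in\mathcal X$, $f:\mathbb R^n\times\mathbb R^m\to\mathbb R^n$, $r:\mathbb R^n\times\mathbb R^m\to\mathbb R$, $q:\mathbb R^n\to\mathbb R$. For $\beta\in\{0,1\}^m$, $x^\beta$ solves $\dot x=f(x,\beta)$, $x(0)=\mathbf x$ on $[0,T]$ (solutions assumed to exist uniquely); $\mathcal J(z,\beta)=\int_0^T r(z(t),\beta)dt+q(z(T))$, $J(\beta)=\mathcal J(x^\beta,\beta)$. $\mathbf 1_i$ is the $i$-th standard basis vector of $\mathbb R^m$. (A1): for each $\alpha\in\{0,1\}^m$, $f(\cdot,\alpha)$ is $C^2$ and globally Lipschitz on $\mathcal X$. (A3): for each $\alpha\in\{0,1\}^m$, $r(\cdot,\alpha)$ and $q$ are continuously differentiable. (Add): for all $x\in\mathcal X$ and $\alpha\in\{0,1\}^m$, $f(x,\alpha)=f(x,0)+\sum_{i=1}^m\big(f(x,\alpha_i\mathbf 1_i)-f(x,0)\big)$ and $r(x,\alpha)=r(x,0)+\sum_{i=1}^m\big(r(x,\alpha_i\mathbf 1_i)-r(x,0)\big)$. Nonstandard derivative: for $\bar\alpha,\alpha\in\{0,1\}^m$, $\epsilon\in[0,1]$, let $x^{\epsilon(\bar\alpha,\alpha)}$ solve $\dot x=(1-\epsilon)f(x,\bar\alpha)+\epsilon f(x,\alpha)$, $x(0)=\mathbf x$, and $\mathcal J^{\epsilon(\bar\alpha,\alpha)}(z)=(1-\epsilon)\mathcal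 J(z,\bar\alpha)+\epsilon\mathcal J(z,\alpha)$. Then $[D^{NS}J(\bar\alpha)]_i=\lim_{\epsilon\to0^+}\frac1\epsilon[\mathcal J^{\epsilon(\bar\alpha,\bar\alpha+\mathbf 1_i)}(x^{\epsilon(\bar\alpha,\bar\alpha+\mathbf 1_i)})-\mathcal J(x^{\bar\alpha},\bar\alpha)]$ if $\bar\alpha_i=0$, and $\lim_{\epsilon\to0^+}\frac1\epsilon[\mathcal J(x^{\bar\alpha},\bar\alpha)-\mathcal J^{\epsilon(\bar\alpha,\bar\alpha-\mathbf 1_i)}(x^{\epsilon(\bar\alpha,\bar\alpha-\mathbf 1_i)})]$ if $\bar\alpha_i=1$. *)

(* Defs.v *)
From Stdlib Require Import Reals.
From mathcomp Require Import ssreflect ssrfun ssrbool eqtype ssrnat fintype bigop.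

Set Implicit Arguments.
Unset Strict Implicit.

Local Open Scope R_scope.

Definition vec (n : nat) := 'I_n -> R.

Definition vzero (n : nat) : vec n := fun _ => 0.
Arguments vzero n _ : clear implicits.
Definition unitv (n : nat) (i : 'I_n) : vec n := fun k => if k == i then 1 else 0.
Definition scal_unit (n : nat) (i : 'I_n) (a : R) : vec n :=
  fun k => if k == i then a else 0.
Definition vadd (n : nat) (u v : vec n) : vec n := fun k => u k + v k.
Definition vsub (n : nat) (u v : vec n) : vec n := fun k => u k - v k.
Definition vscale (n : nat) (a : R) (u : vec n) : vec n := fun k => a * u k.
Definition sumI (m : nat) (F : 'I_m -> R) : R := \big[Rplus/0]_(i < m) F i.
Definition dotv (m : nat) (u v : vec m) : R := sumI (fun i => u i * v i).

Definition is_binary (m : nat) (a : vec m) : Prop := forall i, a i = 0 \/ a i = 1.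
Definition in_box (m : nat) (a : vec m) : Prop := forall i, 0 <= a i <= 1.

Definition cont_Rn (n : nat) (g : vec n -> R) : Prop :=
  forall x eps, 0 < eps -> exists delta, 0 < delta /\
    forall y, (forall k, Rabs (y k - x k) < delta) -> Rabs (g y - g x) < eps.

Definition has_partial (n : nat) (g : vec n -> R) (x : vec n) (j : 'I_n) (l : R) : Prop :=
  derivable_pt_lim (fun h => g (vadd x (scal_unit j h))) 0 l.

Definition C1_Rn (n : nat) (g : vec n -> R) : Prop :=
  exists dg : 'I_n -> vec n -> R,
    (forall j x, has_partial g x j (dg j x)) /\ (forall j, cont_Rn (dg j)).

Definition C2_Rn (n : nat) (g : vec n -> R) : Prop :=
  exists dg : 'I_n -> vec n -> R,
    (forall j x, has_partial g x j (dg j x)) /\ (forall j, C1_Rn (dg j)).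

Definition C2v_Rn (n : nat) (F : vec n -> vec n) : Prop := forall k, C2_Rn (fun x => F x k).

Definition lipschitz_on (n : nat) (X : vec n -> Prop) (F : vec n -> vec n) : Prop :=
  exists L, 0 <= L /\ forall x y, X x -> X y -> forall d,
    (forall k, Rabs (x k - y k) <= d) -> forall k, Rabs (F x k - F y k) <= L * d.

Definition deriv_within (T : R) (g : R -> R) (t v : R) : Prop :=
  forall eps, 0 < eps -> exists delta, 0 < delta /\
    forall s, 0 <= s <= T -> s <> t -> Rabs (s - t) < delta ->
      Rabs ((g s - g t) / (s - t) - v) < eps.

Definition solves (n : nat) (X : vec n -> Prop) (T : R) (x0 : vec n)
    (F : vec n -> vec n) (z : R -> vec n) : Prop :=
  z 0 = x0 /\
  forall t, 0 <= t <= T ->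
    X (z t) /\ forall k, deriv_within T (fun s => z s k) t (F (z t) k).

Definition ex_uniq_sol (n : nat) (X : vec n -> Prop) (T : R) (x0 : vec n)
    (F : vec n -> vec n) : Prop :=
  (exists z, solves X T x0 F z) /\
  forall z1 z2, solves X T x0 F z1 -> solves X T x0 F z2 ->
    forall t, 0 <= t <= T -> forall k, z1 t k = z2 t k.

Definition is_RInt (g : R -> R) (a b v : R) : Prop :=
  exists pr : Riemann_integrable g a b, RiemannInt pr = v.

Definition calJ (n m : nat) (T : R) (r : vec n -> vec m -> R) (q : vec n -> R)
    (z : R -> vec n) (a : vec m) (v : R) : Prop :=
  exists I, is_RInt (fun t => r (z t) a) 0 T I /\ v = I + q (z T).

Definition Jval (n m : nat) (X : vec n -> Prop) (T : R) (x0 : vec n)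
    (f : vec n -> vec m -> vec n) (r : vec n -> vec m -> R) (q : vec n -> R)
    (b : vec m) (v : R) : Prop :=
  exists z, solves X T x0 (fun y => f y b) z /\ calJ T r q z b v.

Definition fmix (n m : nat) (f : vec n -> vec m -> vec n) (ab a : vec m) (eps : R) :
    vec n -> vec n :=
  fun y k => (1 - eps) * f y ab k + eps * f y a k.

Definition Jeps (n m : nat) (X : vec n -> Prop) (T : R) (x0 : vec n)
    (f : vec n -> vec m -> vec n) (r : vec n -> vec m -> R) (q : vec n -> R)
    (ab a : vec m) (eps : R) (v : R) : Prop :=
  exists z, solves X T x0 (fmix f ab a eps) z /\
    exists c1 c2, calJ T r q z ab c1 /\ calJ T r q z a c2 /\
      v = (1 - eps) * c1 + eps * c2.

Definition DNS_comp (n m : nat) (X : vec n -> Prop) (T : R) (x0 : vec n)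
    (f : vec n -> vec m -> vec n) (r : vec n -> vec m -> R) (q : vec n -> R)
    (ab : vec m) (i : 'I_m) (d : R) : Prop :=
  (ab i = 0 ->
    forall eta, 0 < eta -> exists delta, 0 < delta /\
      forall eps, 0 < eps -> eps <= 1 -> eps < delta ->
        forall ve v0, Jeps X T x0 f r q ab (vadd ab (unitv i)) eps ve ->
          Jval X T x0 f r q ab v0 ->
          Rabs ((ve - v0) / eps - d) < eta) /\
  (ab i = 1 ->
    forall eta, 0 < eta -> exists delta, 0 < delta /\
      forall eps, 0 < eps -> eps <= 1 -> eps < delta ->
        forall ve v0, Jeps X T x0 f r q ab (vsub ab (unitv i)) eps ve ->
          Jval X T x0 f r q ab v0 ->
          Rabs ((v0 - ve) / eps - d) < eta).

Definition fhat (n m : nat) (f : vec n -> vec m -> vec n) (x : vec n) (a : vec m) : vec n :=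
  fun k => f x (vzero m) k + sumI (fun i => a i * (f x (unitv i) k - f x (vzero m) k)).
Definition rhat (n m : nat) (r : vec n -> vec m -> R) (x : vec n) (a : vec m) : R :=
  r x (vzero m) + sumI (fun i => a i * (r x (unitv i) - r x (vzero m))).

Definition Jhat (n m : nat) (X : vec n -> Prop) (T : R) (x0 : vec n)
    (f : vec n -> vec m -> vec n) (r : vec n -> vec m -> R) (q : vec n -> R)
    (a : vec m) (v : R) : Prop :=
  exists y, solves X T x0 (fun z => fhat f z a) y /\
    exists I, is_RInt (fun t => rhat r (y t) a) 0 T I /\ v = I + q (y T).

Definition Jhat_concave (n m : nat) (X : vec n -> Prop) (T : R) (x0 : vec n)
    (f : vec n -> vec m -> vec n) (r : vec n -> vec m -> R) (q : vec n -> R) : Prop :=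
  forall a b lam, in_box a -> in_box b -> 0 <= lam <= 1 ->
    forall va vb vc,
      Jhat X T x0 f r q a va -> Jhat X T x0 f r q b vb ->
      Jhat X T x0 f r q (vadd (vscale lam a) (vscale (1 - lam) b)) vc ->
      lam * va + (1 - lam) * vb <= vc.

(* Main.v *)
Require Import Defs.
From HB Require Import structures.
From Stdlib Require Import Reals Lra Psatz ClassicalEpsilon FunctionalExtensionality Classical.
From mathcomp Require Import ssreflect ssrfun ssrbool eqtype ssrnat fintype bigop.
Set Implicit Arguments.
Unset Strict Implicit.
Local Open Scope R_scope.

HB.instance Definition _ := Monoid.isComLaw.Build R 0%R Rplus (fun a b c => esym (Rplus_assoc a b c)) Rplus_comm Rplus_0_l.

Lemma sumI_ext m (F G : 'I_m -> R) : (forall i, F i = G i) -> sumI F = sumI G.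
Proof. move=> H; rewrite /sumI; apply: eq_bigr => i _; apply: H. Qed.
Lemma sumI_plus m (F G : 'I_m -> R) : sumI (fun i => F i + G i) = sumI F + sumI G.
Proof. by rewrite /sumI big_split. Qed.
Lemma sumI_scal m c (F : 'I_m -> R) : sumI (fun i => c * F i) = c * sumI F.
Proof.
rewrite /sumI. apply: (big_ind2 (fun x y => x = c * y)).
- ring.
- move=> x1 x2 y1 y2 -> ->; ring.
- by [].
Qed.
Lemma sumI_0 m : sumI (fun _ : 'I_m => 0) = 0.
Proof. rewrite /sumI; apply: big1 => //. Qed.
Lemma sumI_minus m (F G : 'I_m -> R) : sumI (fun i => F i - G i) = sumI F - sumI G.
Proof.
have -> : sumI (fun i => F i - G i) = sumI (fun i => F i + (-1) * G i)
  by apply: sumI_ext => i; ring.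
rewrite sumI_plus sumI_scal; ring.
Qed.
Lemma sumI_le m (F G : 'I_m -> R) : (forall i, F i <= G i) -> sumI F <= sumI G.
Proof.
move=> H; rewrite /sumI. apply: (big_ind2 (fun x y => x <= y)).
- lra.
- move=> x1 x2 y1 y2 ? ?; lra.
- move=> i _; apply: H.
Qed.
Lemma sumI_ge0 m (F : 'I_m -> R) : (forall i, 0 <= F i) -> 0 <= sumI F.
Proof. move=> H; rewrite -(sumI_0 m); apply: sumI_le => i; apply: H. Qed.
Lemma sumI_abs m (F : 'I_m -> R) : Rabs (sumI F) <= sumI (fun i => Rabs (F i)).
Proof.
rewrite /sumI. apply: (big_ind2 (fun x y => Rabs x <= y)).
- rewrite Rabs_R0; lra.
- move=> x1 x2 y1 y2 ? ?. have := Rabs_triang x1 y1. lra.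
- move=> i _; lra.
Qed.
Lemma sumI_single m (F : 'I_m -> R) k : (forall i, 0 <= F i) -> F k <= sumI F.
Proof.
move=> H. rewrite /sumI (bigD1 k) //=.
match goal with |- _ <= _ + ?S => have : 0 <= S end.
  apply: (big_ind (fun x => 0 <= x)) => //; [lra | move=> x y ? ?; lra].
move=> ?; lra.
Qed.
Lemma sumI_delta m (k : 'I_m) c : sumI (fun i => if i == k then c else 0) = c.
Proof.
rewrite /sumI (bigD1 k) //= eqxx big1; first ring.
by move=> i /negbTE ->.
Qed.
Lemma sumI_const m c : sumI (fun _ : 'I_m => c) = INR m * c.
Proof.
rewrite /sumI big_const_ord. elim: m => [|m IH] /=; first ring.
rewrite IH; case: m {IH} => [|m] /=; ring.
Qed.
Lemma sumI_telescope (N : nat) (G : nat -> R) :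
  \big[Rplus/0]_(i < N) (G i.+1 - G i) = G N - G O.
Proof.
elim: N => [|N IH]; first by rewrite big_ord0; ring.
rewrite big_ord_recr /= IH; ring.
Qed.

Definition nrm n (u : vec n) : R := sumI (fun k => Rabs (u k)).
Lemma nrm_ge0 n (u : vec n) : 0 <= nrm u.
Proof. apply: sumI_ge0 => i; apply: Rabs_pos. Qed.
Lemma nrm_comp n (u : vec n) k : Rabs (u k) <= nrm u.
Proof. apply: (@sumI_single n (fun k => Rabs (u k)) k) => i; apply: Rabs_pos. Qed.
Lemma nrm_le_const n (u : vec n) c : (forall k, Rabs (u k) <= c) -> nrm u <= INR n * c.
Proof. move=> H; rewrite -sumI_const; apply: sumI_le; apply: H. Qed.
Lemma nrm_triang n (u v : vec n) : nrm (fun k => u k + v k) <= nrm u + nrm v.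
Proof. rewrite /nrm -sumI_plus; apply: sumI_le => i; apply: Rabs_triang. Qed.
Lemma nrm_ext n (u v : vec n) : (forall k, u k = v k) -> nrm u = nrm v.
Proof. move=> H; apply: sumI_ext => i; by rewrite H. Qed.
Lemma nrm_scal n c (u : vec n) : nrm (fun k => c * u k) = Rabs c * nrm u.
Proof. rewrite /nrm -sumI_scal; apply: sumI_ext => i; apply: Rabs_mult. Qed.
Lemma nrm_opp n (u : vec n) : nrm (fun k => - u k) = nrm u.
Proof. apply: sumI_ext => i; apply: Rabs_Ropp. Qed.
Lemma nrm_sub_sym n (u v : vec n) : nrm (fun k => u k - v k) = nrm (fun k => v k - u k).
Proof. apply: sumI_ext => i; apply: Rabs_minus_sym. Qed.
Lemma nrm_le n (u v : vec n) : (forall k, Rabs (u k) <= Rabs (v k)) -> nrm u <= nrm v.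
Proof. move=> H; apply: sumI_le => i; apply: H. Qed.
Lemma sumI_bound m (F : 'I_m -> R) (x : vec m) c :
  (forall i, Rabs (F i) <= c * Rabs (x i)) -> Rabs (sumI F) <= c * nrm x.
Proof.
move=> H. apply: Rle_trans (sumI_abs _) _. rewrite /nrm -sumI_scal.
by apply: sumI_le.
Qed.

Lemma fin_min m (F : 'I_m -> R) : (forall k, 0 < F k) -> exists d, 0 < d /\ forall k, d <= F k.
Proof.
move=> H. set S := sumI (fun k => / F k).
have HS : 0 <= S by apply: sumI_ge0 => k; have := H k => ?; left; apply: Rinv_0_lt_compat.
exists (/ (1 + S)); split; first by apply: Rinv_0_lt_compat; lra.
move=> k. have Hk := H k.
have Hle : / F k <= S by apply: (@sumI_single m (fun k => / F k) k) => i; have := H i => ?; left; apply: Rinv_0_lt_compat.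
rewrite -(Rinv_inv (F k)). apply: Rinv_le_contravar; first by apply: Rinv_0_lt_compat.
lra.
Qed.

Lemma fin_min_ex m (P : 'I_m -> R -> Prop) :
  (forall k d d', P k d -> 0 < d' <= d -> P k d') ->
  (forall k, exists d, 0 < d /\ P k d) -> exists d, 0 < d /\ forall k, P k d.
Proof.
move=> Hm H.
pose F := fun k => proj1_sig (constructive_indefinite_description _ (H k)).
have HF : forall k, 0 < F k /\ P k (F k).
  move=> k; rewrite /F; case: (constructive_indefinite_description _ _) => //=.
have [d [Hd Hd2]] := @fin_min m F (fun k => proj1 (HF k)).
exists d; split => // k. apply: (Hm k (F k)); first exact: proj2 (HF k).
split => //.
Qed.

Lemma exists_above (E : R -> Prop) s r : is_lub E s -> r < s -> exists x, E x /\ r < x.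
Proof.
move=> [Hub Hl] Hr. apply: NNPP => Hn.
have : s <= r.
  apply: Hl => x Ex. apply: Rnot_lt_le => Hx. apply: Hn; exists x; split => //.
lra.
Qed.

Lemma l2g (T : R) (Q : R -> R -> Prop) : 0 <= T ->
  (forall t d d', Q t d -> 0 < d' <= d -> Q t d') ->
  (forall t0, 0 <= t0 <= T -> exists rho d, 0 < rho /\ 0 < d /\
     forall t, 0 <= t <= T -> Rabs (t - t0) < rho -> Q t d) ->
  exists d, 0 < d /\ forall t, 0 <= t <= T -> Q t d.
Proof.
move=> HT Hmon Hloc.
pose E := fun s => 0 <= s <= T /\ exists d, 0 < d /\ forall t, 0 <= t <= s -> Q t d.
have E0 : E 0.
  split; first lra.
  have [rho [d [Hr [Hd H]]]] := Hloc 0 (conj (Rle_refl 0) HT).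
  exists d; split => // t Ht. apply: H; first lra.
  have -> : t - 0 = 0 by lra. rewrite Rabs_R0; lra.
have Hb : bound E by exists T => x [[? ?] _].
have [s Hs] := completeness E Hb (ex_intro _ 0 E0).
have Hs0 : 0 <= s by apply: (proj1 Hs).
have HsT : s <= T by apply: (proj2 Hs) => x [[? ?] _].
have [rho1 [d1 [Hr1 [Hd1 Hl1]]]] := Hloc s (conj Hs0 HsT).
have [x [[Hx [d0 [Hd0 Hx0]]] Hxs]] := exists_above Hs (r := s - rho1) ltac:(lra).
have Es' : E (Rmin T (s + rho1/2)).
  split. split; [apply: Rmin_glb; lra | apply: Rmin_l].
  exists (Rmin d0 d1); split; first by apply: Rmin_glb_lt.
  move=> t Ht.
  have HtT : t <= T by have := Rmin_l T (s + rho1/2); lra.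
  have Hts : t <= s + rho1/2 by have := Rmin_r T (s + rho1/2); lra.
  case: (Rle_lt_dec t x) => Htx.
  - apply: (Hmon t d0); first by apply: Hx0; lra.
    split; [apply: Rmin_glb_lt => // | apply: Rmin_l].
  - apply: (Hmon t d1); last by split; [apply: Rmin_glb_lt => // | apply: Rmin_r].
    apply: Hl1; first lra. apply: Rabs_def1; lra.
have Hle : Rmin T (s + rho1/2) <= s by apply: (proj1 Hs).
have HTs : T <= s.
  apply: Rnot_lt_le => HTs. move: Hle; rewrite /Rmin; case: Rle_dec; lra.
have -> : T = Rmin T (s + rho1/2) by rewrite /Rmin; case: Rle_dec; lra.
case: Es' => _ [d [Hd H]]. exists d; split => //.
Qed.

Lemma dw_approx T g t v : deriv_within T g t v -> forall z, 0 < z ->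
  exists d, 0 < d /\ forall s, 0 <= s <= T -> Rabs (s - t) < d ->
    Rabs (g s - g t - v * (s - t)) <= z * Rabs (s - t).
Proof.
move=> H z Hz. have [d [Hd Hd2]] := H z Hz. exists d; split => // s Hs Hst.
case: (Req_dec s t) => Heq.
  subst; have -> : g t - g t - v * (t - t) = 0 by ring. rewrite Rabs_R0 Rminus_diag Rabs_R0; lra.
have Hne : s - t <> 0 by lra.
have := Hd2 s Hs Heq Hst.
have -> : g s - g t - v * (s - t) = ((g s - g t) / (s - t) - v) * (s - t) by field.
rewrite Rabs_mult => ?. apply: Rmult_le_compat_r; [apply: Rabs_pos | lra].
Qed.

Lemma nrm_rev n (x y : vec n) : Rabs (nrm x - nrm y) <= nrm (fun k => x k - y k).
Proof.
rewrite /nrm -sumI_minus. apply: Rle_trans (sumI_abs _) _.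
apply: sumI_le => i. apply: Rabs_triang_inv2.
Qed.

Lemma dw_vec n T (D : R -> vec n) t (v : vec n) :
  (forall k, deriv_within T (fun s => D s k) t (v k)) -> forall z, 0 < z ->
  exists d, 0 < d /\ forall s, 0 <= s <= T -> Rabs (s - t) < d ->
    nrm (fun k => D s k - D t k - v k * (s - t)) <= INR n * (z * Rabs (s - t)).
Proof.
move=> H z Hz.
have [d [Hd H2]] := fin_min_ex (P := fun k d => forall s, 0 <= s <= T -> Rabs (s - t) < d ->
    Rabs (D s k - D t k - v k * (s - t)) <= z * Rabs (s - t))
  ltac:(move=> k d d' Hk Hd' s Hs Hst; apply: Hk => //; lra)
  (fun k => dw_approx (H k) Hz).
exists d; split => // s Hs Hst. apply: nrm_le_const => k. by apply: H2.
Qed.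

Lemma dw_nrm n T (D : R -> vec n) t (v : vec n) :
  (forall k, deriv_within T (fun s => D s k) t (v k)) -> forall z, 0 < z ->
  exists d, 0 < d /\ forall s, 0 <= s <= T -> Rabs (s - t) < d ->
    Rabs (nrm (D s) - nrm (D t)) <= (nrm v + INR n * z) * Rabs (s - t).
Proof.
move=> H z Hz. have [d [Hd H2]] := dw_vec H Hz. exists d; split => // s Hs Hst.
apply: Rle_trans (nrm_rev _ _) _.
have := H2 s Hs Hst.
have := nrm_triang (fun k => D s k - D t k - v k * (s - t)) (fun k => v k * (s - t)).
have -> : nrm (fun k => v k * (s - t)) = Rabs (s - t) * nrm v.
  rewrite -nrm_scal; apply: nrm_ext => k; ring.
have -> : nrm (fun k => D s k - D t k - v k * (s - t) + v k * (s - t)) = nrm (fun k => D s k - D t k)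
  by apply: nrm_ext => k; ring.
nra.
Qed.

Lemma exp_le x y : x <= y -> exp x <= exp y.
Proof. case => [H|->]; [left; apply: exp_increasing | right] => //. Qed.

Lemma exp_m1_le h : 0 <= h -> exp h - 1 <= h * exp h.
Proof.
move=> Hh. have H1 := exp_ineq1_le (- h).
have H2 : exp h * exp (- h) = 1 by rewrite -exp_plus Rplus_opp_r exp_0.
have := exp_pos h. nra.
Qed.

Definition Bf a b K g x := (a + g + (b + g) * x) * exp (K * x).
Lemma B_bounds a b K T g s t : 0 <= a -> 0 <= b -> 0 <= K -> 0 < g -> 0 <= s -> s <= t -> t <= T ->
  (t - s) * (b + g + K * Bf a b K g s) <= Bf a b K g t - Bf a b K g s /\  Bf a b K g t - Bf a b K g s <= (t - s) * ((b + g + K * (a + g + (b + g) * T)) * exp (K * T)).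
Proof.
move=> Ha Hb HK Hg Hs Hst HtT. rewrite /Bf.
set P := a + g + (b + g) * s. set h := t - s.
have HP : 0 <= P by rewrite /P; nra.
have Hh : 0 <= h by rewrite /h; lra.
have Et : exp (K * t) = exp (K * s) * exp (K * h) by rewrite -exp_plus /h; f_equal; ring.
have Ht : a + g + (b + g) * t = P + (b + g) * h by rewrite /P /h; ring.
rewrite Et Ht.
have Es1 : 1 <= exp (K * s) by have := exp_ineq1_le (K * s); nra.
have Eh1 : 1 + K * h <= exp (K * h) by apply: exp_ineq1_le.
have Eh2 : exp (K * h) - 1 <= K * h * exp (K * h) by apply: exp_m1_le; nra.
have EsP := exp_pos (K * s). have EhP := exp_pos (K * h).
have ET : exp (K * s) * exp (K * h) <= exp (K * T) by rewrite -Et; apply: exp_le; nra.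
have HPT : P <= a + g + (b + g) * T by rewrite /P; nra.
split.
- have : (P + (b + g) * h) * (exp (K * s) * exp (K * h)) - P * exp (K * s)
     = P * exp (K * s) * (exp (K * h) - 1) + (b + g) * h * (exp (K * s) * exp (K * h)) by ring.
  move=> ->.
  have : P * exp (K * s) * (K * h) <= P * exp (K * s) * (exp (K * h) - 1).
    apply: Rmult_le_compat_l; nra.
  have : (b + g) * h <= (b + g) * h * (exp (K * s) * exp (K * h)).
    have ? : 1 <= exp (K * s) * exp (K * h) by nra.
    rewrite -{1}(Rmult_1_r ((b + g) * h)); apply: Rmult_le_compat_l => //; nra.
  move=> ? ?; nra.
- have : (P + (b + g) * h) * (exp (K * s) * exp (K * h)) - P * exp (K * s)
     = P * exp (K * s) * (exp (K * h) - 1) + (b + g) * h * (exp (K * s) * exp (K * h)) by ring.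
  move=> ->.
  have : P * exp (K * s) * (exp (K * h) - 1) <= P * exp (K * s) * (K * h * exp (K * h)).
    apply: Rmult_le_compat_l; nra.
  have : h * K * P * (exp (K * s) * exp (K * h)) <= h * K * (a + g + (b + g) * T) * exp (K * T).
    have ? : 0 <= h * K by nra.
    apply: Rmult_le_compat; [nra | nra | | exact ET].
    apply: Rmult_le_compat_l => //.
  have : (b + g) * h * (exp (K * s) * exp (K * h)) <= (b + g) * h * exp (K * T).
    apply: Rmult_le_compat_l; nra.
  move=> ? ? ?; nra.
Qed.

Lemma Rabs_le_between x y : Rabs x <= y -> - y <= x <= y.
Proof. move=> H; split_Rabs; lra. Qed.

Lemma min3 x y z : 0 < x -> 0 < y -> 0 < z -> exists h, 0 < h /\ h <= x /\ h <= y /\ h <= z.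
Proof.
move=> Hx Hy Hz. exists (Rmin x (Rmin y z)).
have := Rmin_l x (Rmin y z). have := Rmin_r x (Rmin y z). have := Rmin_l y z. have := Rmin_r y z.
have : 0 < Rmin x (Rmin y z) by apply: Rmin_glb_lt => //; apply: Rmin_glb_lt.
move=> *; repeat split; lra.
Qed.

Lemma gronwall_strict n T (D G : R -> vec n) K a b g :
  0 <= T -> 0 <= K -> 0 <= a -> 0 <= b -> 0 < g ->
  (forall t, 0 <= t <= T -> forall k, deriv_within T (fun s => D s k) t (G t k)) ->
  (forall t, 0 <= t <= T -> nrm (G t) <= K * nrm (D t) + b) ->
  nrm (D 0) <= a ->
  forall t, 0 <= t <= T -> nrm (D t) < (a + g + (b + g) * t) * exp (K * t).
Proof.
move=> HT HK Ha Hb Hg Hd HG H0.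
set B := Bf a b K g.
set e := fun x => nrm (D x).
change (forall t, 0 <= t <= T -> e t < B t).
set Cp := (b + g + K * (a + g + (b + g) * T)) * exp (K * T).
have HCp : 0 <= Cp.
  rewrite /Cp; apply: Rmult_le_pos; last by left; apply: exp_pos.
  have : 0 <= K * (a + g + (b + g) * T) by apply: Rmult_le_pos => //; nra.
  move=> ?; lra.
have HBl : forall s t, 0 <= s -> s <= t -> t <= T -> (t - s) * (b + g + K * B s) <= B t - B s
  by move=> s t ? ? ?; case: (@B_bounds a b K T g s t Ha Hb HK Hg ltac:(lra) ltac:(lra) ltac:(lra)).
have HBabs : forall s t, 0 <= s <= T -> 0 <= t <= T -> Rabs (B t - B s) <= Cp * Rabs (t - s).
  move=> s t Hs Ht. have HBp : forall x, 0 <= x -> 0 <= B x.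
    move=> x Hx; rewrite /B /Bf; apply: Rmult_le_pos; [nra | left; apply: exp_pos].
  case: (Rle_lt_dec s t) => Hst.
  - case: (@B_bounds a b K T g s t Ha Hb HK Hg ltac:(lra) ltac:(lra) ltac:(lra)) => H1 H2; rewrite -/B in H1 H2.
    have : 0 <= (t - s) * (b + g + K * B s).
      apply: Rmult_le_pos; first lra. have := HBp s (proj1 Hs). move=> ?; nra.
    move=> H3. rewrite (Rabs_right (t - s)); last lra. rewrite Rabs_right; last lra.
    rewrite Rmult_comm. exact: H2.
  - case: (@B_bounds a b K T g t s Ha Hb HK Hg ltac:(lra) ltac:(lra) ltac:(lra)) => H1 H2; rewrite -/B in H1 H2.
    have : 0 <= (s - t) * (b + g + K * B t).
      apply: Rmult_le_pos; first lra. have := HBp t (proj1 Ht). move=> ?; nra.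
    move=> H3. rewrite (Rabs_left1 (t - s)); last lra. rewrite Rabs_left1; last lra.
    have -> : - (t - s) = s - t by ring. have -> : - (B t - B s) = B s - B t by ring.
    rewrite Rmult_comm. exact: H2.
have Hlip : forall t, 0 <= t <= T -> exists d, 0 < d /\ forall s, 0 <= s <= T -> Rabs (s - t) < d ->
    Rabs (e s - e t) <= (nrm (G t) + INR n) * Rabs (s - t).
  move=> t Ht. have [d [Hd' H]] := dw_nrm (Hd t Ht) Rlt_0_1. exists d; split => // s Hs Hst.
  have := H s Hs Hst. by rewrite Rmult_1_r.
have B0 : B 0 = a + g by rewrite /B /Bf !Rmult_0_r exp_0; ring.
pose E := fun s => 0 <= s <= T /\ forall t, 0 <= t <= s -> e t < B t.
have E0 : E 0.
  split; first lra. move=> t Ht. have -> : t = 0 by lra. rewrite B0 /e; lra.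
have Hbd : bound E by exists T => x [[? ?] _].
have [s Hs] := completeness E Hbd (ex_intro _ 0 E0).
have Hs0 : 0 <= s by apply: (proj1 Hs).
have HsT : s <= T by apply: (proj2 Hs) => x [[? ?] _].
have Hbelow : forall t, 0 <= t < s -> e t < B t.
  move=> t Ht. have [x [[_ Hx] Htx]] := exists_above Hs (r := t) ltac:(lra). apply: Hx; lra.
have He0 : e 0 < B 0 by rewrite B0 /e; lra.
have C1 : e s <= B s.
  apply: Rnot_lt_le => Hgt.
  have Hs0' : 0 < s by case: Hs0 => // Hs0; rewrite -Hs0 in Hgt; lra.
  have [d [Hd0 Hl]] := Hlip s (conj Hs0 HsT).
  set C := nrm (G s) + INR n.
  have HC : 0 <= C by rewrite /C; move: (nrm_ge0 (G s)) => ?; move: (pos_INR n) => ?; lra.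
  set gap := e s - B s.
  have [h [Hh [Hh1 [Hh2 Hh3]]]] := @min3 (d/2) (s/2) (gap / (2 * (C + Cp + 1))) ltac:(lra) ltac:(lra) ltac:(apply: Rdiv_lt_0_compat; try rewrite /gap; lra).
  have Hh3' : h * (2 * (C + Cp + 1)) <= gap.
    have : gap / (2 * (C + Cp + 1)) * (2 * (C + Cp + 1)) = gap by field; lra.
    move=> Heq; rewrite -Heq; apply: Rmult_le_compat_r; lra.
  have Habs : Rabs (s - h - s) = h by rewrite Rabs_left1; lra.
  have H1 := Hl (s - h) ltac:(lra) (ltac:(rewrite Habs; lra) : Rabs (s - h - s) < d). rewrite Habs in H1.
  have H2 := HBabs (s - h) s ltac:(lra) ltac:(lra). have Habs2 : Rabs (s - (s - h)) = h by rewrite Rabs_right; lra.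
  rewrite Habs2 in H2.
  have H3 := Hbelow (s - h) ltac:(lra).
  move: H1 H2 => /Rabs_le_between H1 /Rabs_le_between H2.
  have ? : 0 <= C * h by apply: Rmult_le_pos; lra.
  have ? : 0 <= Cp * h by apply: Rmult_le_pos; lra.
  have Hg' : C * h + Cp * h < gap by nra.
  rewrite /gap /C in Hg'; lra.
have C2 : e s <> B s.
  move=> Heq.
  have Hs0' : 0 < s by case: Hs0 => // Hs0; rewrite -Hs0 in Heq; lra.
  set z := g / (2 * (INR n + 1)).
  have Hn := pos_INR n.
  have Hz : 0 < z by rewrite /z; apply: Rdiv_lt_0_compat; lra.
  have Hnz : INR n * z <= g / 2.
    rewrite /z. have -> : INR n * (g / (2 * (INR n + 1))) = (g / 2) * (INR n / (INR n + 1)) by field; lra.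
    have : INR n / (INR n + 1) <= 1.
      have -> : INR n / (INR n + 1) = 1 - 1 / (INR n + 1) by field; lra.
      have : 0 < 1 / (INR n + 1) by apply: Rdiv_lt_0_compat; lra.
      lra.
    move=> ?; nra.
  have [d [Hd0 Hl]] := dw_nrm (Hd s (conj Hs0 HsT)) Hz.
  have HKC : 0 <= K * Cp by apply: Rmult_le_pos.
  have [h [Hh [Hh1 [Hh2 Hh3]]]] := @min3 (d/2) (s/2) (g / (4 * (K * Cp + 1))) ltac:(lra) ltac:(lra) ltac:(apply: Rdiv_lt_0_compat; lra).
  have Hh3' : h * (4 * (K * Cp + 1)) <= g.
    have : g / (4 * (K * Cp + 1)) * (4 * (K * Cp + 1)) = g by field; lra.
    move=> Heq'; rewrite -Heq'; apply: Rmult_le_compat_r; lra.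
  have Habs : Rabs (s - h - s) = h by rewrite Rabs_left1; lra.
  have H1 := Hl (s - h) ltac:(lra) (ltac:(rewrite Habs; lra) : Rabs (s - h - s) < d). rewrite Habs in H1.
  change (Rabs (e (s - h) - e s) <= (nrm (G s) + INR n * z) * h) in H1.
  have H2 := HBabs (s - h) s ltac:(lra) ltac:(lra). have Habs2 : Rabs (s - (s - h)) = h by rewrite Rabs_right; lra.
  rewrite Habs2 in H2.
  have H3 := Hbelow (s - h) ltac:(lra).
  have H4 := HBl (s - h) s ltac:(lra) ltac:(lra) HsT.
  have H5 := HG s (conj Hs0 HsT). change (nrm (D s)) with (e s) in H5.
  move: H1 H2 => /Rabs_le_between H1 /Rabs_le_between H2.
  rewrite (_ : s - (s - h) = h) in H4; last ring.
  have H6a : (nrm (G s) + INR n * z) * h <= (K * e s + b + g / 2) * h by apply: Rmult_le_compat_r; lra.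
  have H6 : e s - e (s - h) <= h * (K * e s + b + g / 2) by lra.
  have H7 : h * (b + g + K * B (s - h)) < h * (K * B s + b + g / 2) by rewrite -Heq; lra.
  have H8 : b + g + K * B (s - h) < K * B s + b + g / 2 by apply: (Rmult_lt_reg_l h).
  have H9 : K * (B s - B (s - h)) <= K * (Cp * h) by apply: Rmult_le_compat_l; lra.
  have H10 : K * (Cp * h) * 4 <= g by nra.
  nra.
have C3 : e s < B s by lra.
have HsT' : s = T.
  apply: Rle_antisym => //. apply: Rnot_lt_le => HsT'.
  have [d [Hd0 Hl]] := Hlip s (conj Hs0 HsT).
  set C := nrm (G s) + INR n.
  have HC : 0 <= C by rewrite /C; move: (nrm_ge0 (G s)) => ?; move: (pos_INR n) => ?; lra.
  set gap := B s - e s.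
  have [h [Hh [Hh1 [Hh2 Hh3]]]] := @min3 (d/2) (T - s) (gap / (2 * (C + Cp + 1))) ltac:(lra) ltac:(lra) ltac:(apply: Rdiv_lt_0_compat; try rewrite /gap; lra).
  have Hh3' : h * (2 * (C + Cp + 1)) <= gap.
    have : gap / (2 * (C + Cp + 1)) * (2 * (C + Cp + 1)) = gap by field; lra.
    move=> Heq; rewrite -Heq; apply: Rmult_le_compat_r; lra.
  have : E (s + h).
    split; first lra. move=> t Ht. case: (Rlt_le_dec t s) => Hts; first by apply: Hbelow; lra.
    have Habs : Rabs (t - s) <= h by rewrite Rabs_right; lra.
    have H1 := Hl t ltac:(lra) ltac:(lra).
    have H2 := HBabs s t ltac:(lra) ltac:(lra).
    move: H1 H2 => /Rabs_le_between H1 /Rabs_le_between H2.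
    have : C * Rabs (t - s) <= C * h by apply: Rmult_le_compat_l.
    have : Cp * Rabs (t - s) <= Cp * h by apply: Rmult_le_compat_l.
    move=> ? ?. have ? : 0 <= C * h by apply: Rmult_le_pos; lra.
    have ? : 0 <= Cp * h by apply: Rmult_le_pos; lra.
    unfold gap, C in *. lra.
  move=> /(proj1 Hs). lra.
move=> t Ht. case: (Rlt_le_dec t s) => Hts; first by apply: Hbelow; lra.
have -> : t = s by lra. exact C3.
Qed.

Lemma gronwall n T (D G : R -> vec n) K a b :
  0 <= T -> 0 <= K -> 0 <= a -> 0 <= b ->
  (forall t, 0 <= t <= T -> forall k, deriv_within T (fun s => D s k) t (G t k)) ->
  (forall t, 0 <= t <= T -> nrm (G t) <= K * nrm (D t) + b) ->
  nrm (D 0) <= a ->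
  forall t, 0 <= t <= T -> nrm (D t) <= (a + b * T) * exp (K * T).
Proof.
move=> HT HK Ha Hb Hd HG H0 t Ht.
set x := nrm (D t). set y := (a + b * T) * exp (K * T).
set c := (1 + T) * exp (K * T).
have Hc : 0 < c by rewrite /c; apply: Rmult_lt_0_compat; [lra | apply: exp_pos].
have Hall : forall g, 0 < g -> x <= y + g * c.
  move=> g Hg. have H1 := gronwall_strict HT HK Ha Hb Hg Hd HG H0 Ht.
  have E1 : exp (K * t) <= exp (K * T) by apply: exp_le; nra.
  have E2 := exp_pos (K * t).
  have H2 : (a + g + (b + g) * t) * exp (K * t) <= (a + g + (b + g) * T) * exp (K * T).
    apply: Rmult_le_compat; nra.
  rewrite /y /c. rewrite -/x in H1.
  have -> : (a + b * T) * exp (K * T) + g * ((1 + T) * exp (K * T)) = (a + g + (b + g) * T) * exp (K * T) by ring.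
  lra.
apply: Rnot_lt_le => Hlt.
have H := Hall ((x - y) / (2 * c)) ltac:(apply: Rdiv_lt_0_compat; lra).
have E : (x - y) / (2 * c) * c = (x - y) / 2 by field; lra.
lra.
Qed.

Definition close n (r : R) (x y : vec n) := forall k, Rabs (x k - y k) <= r.

Lemma deriv_shift f c l : derivable_pt_lim (fun h => f (c + h)) 0 l -> derivable_pt_lim f c l.
Proof.
move=> H eps Heps. have [d Hd] := H eps Heps. exists d => h Hh Hhd.
have := Hd h Hh Hhd. by rewrite Rplus_0_l Rplus_0_r.
Qed.

Lemma partial_at n (g : vec n -> R) (dg : 'I_n -> vec n -> R) :
  (forall j x, has_partial g x j (dg j x)) ->
  forall (S : vec n) j c, derivable_pt_lim (fun c => g (vadd S (scal_unit j c))) c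
                             (dg j (vadd S (scal_unit j c))).
Proof.
move=> H S j c. apply: deriv_shift.
have E : (fun h => g (vadd S (scal_unit j (c + h)))) =
         (fun h => g (vadd (vadd S (scal_unit j c)) (scal_unit j h))).
  apply: functional_extensionality => h. f_equal. apply: functional_extensionality => i.
  rewrite /vadd /scal_unit. case: (i == j); ring.
rewrite E. apply: H.
Qed.

Lemma mvt_any (psi psi' : R -> R) : (forall c, derivable_pt_lim psi c (psi' c)) ->
  forall h, exists c, (0 <= c <= h \/ h <= c <= 0) /\ psi h - psi 0 = psi' c * h.
Proof.
move=> H h. case: (Rtotal_order 0 h) => [Hh|[Hh|Hh]].
- have [c [E Hc]] := MVT_cor2 psi psi' _ _ Hh (fun c _ => H c).
  exists c; split; [left; lra | rewrite E; ring].
- subst. exists 0; split; [left; lra | ring].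
- have [c [E Hc]] := MVT_cor2 psi psi' _ _ Hh (fun c _ => H c).
  exists c; split; [right; lra |]. have : psi 0 - psi h = psi' c * (0 - h) by [].
  move=> E'. lra.
Qed.

Definition stair n (x z : vec n) (k : nat) : vec n := fun i => if (i < k)%N then z i else x i.

Lemma stair_step n (x z : vec n) (k : 'I_n) :
  stair x z k.+1 = vadd (stair x z k) (scal_unit k (z k - x k)).
Proof.
apply: functional_extensionality => i. rewrite /stair /vadd /scal_unit.
case: (ltngtP i k) => Hik.
- have -> : (i < k.+1)%N by apply: ltnW; rewrite ltnS.
  have -> : (i == k) = false by apply/negbTE; rewrite neq_ltn Hik.
  ring.
- have -> : (i < k.+1)%N = false by apply/negbTE; rewrite -leqNgt.
  have -> : (i == k) = false by apply/negbTE; rewrite neq_ltn Hik orbT.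
  ring.
- have Eik : i = k by apply: val_inj.
  subst. rewrite ltnSn eqxx. ring.
Qed.

Lemma lin_err n (g : vec n -> R) (dg : 'I_n -> vec n -> R) (p x z : vec n) rho eta :
  (forall j y, has_partial g y j (dg j y)) ->
  (forall xi, close rho xi p -> forall j, Rabs (dg j xi - dg j p) <= eta) ->
  close rho x p -> close rho z p ->
  Rabs (g z - g x - sumI (fun j => dg j p * (z j - x j))) <= eta * nrm (fun j => z j - x j).
Proof.
move=> Hp Hc Hx Hz.
have Etel : g z - g x = sumI (fun k : 'I_n => g (stair x z k.+1) - g (stair x z k)).
  rewrite /sumI (sumI_telescope n (fun k => g (stair x z k))).
  have -> : stair x z n = z by apply: functional_extensionality => i; rewrite /stair ltn_ord.
  have -> : stair x z 0 = x by apply: functional_extensionality => i.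
  done.
rewrite Etel -sumI_minus. apply: Rle_trans (sumI_abs _) _.
rewrite /nrm -sumI_scal. apply: sumI_le => k.
set S := stair x z k.
have Hd := partial_at Hp S k.
have [c [Hcb Ec]] := mvt_any Hd (z k - x k).
have E1 : vadd S (scal_unit k (z k - x k)) = stair x z k.+1 by rewrite stair_step.
have E0 : vadd S (scal_unit k 0) = S.
  apply: functional_extensionality => i; rewrite /vadd /scal_unit; case: (i == k); ring.
rewrite E1 E0 in Ec. rewrite Ec.
have Hxi : close rho (vadd S (scal_unit k c)) p.
  move=> i. rewrite /vadd /scal_unit /S /stair.
  have Hxi := Hx i. have Hzi := Hz i.
  case: eqP => [Hik|Hik].
  - subst. rewrite ltnn. move: (Hx k) (Hz k) => /Rabs_le_between ? /Rabs_le_between ?.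
    apply: Rabs_le. lra.
  - rewrite Rplus_0_r. by case: (i < k)%N.
have := Hc _ Hxi k.
rewrite -Rmult_minus_distr_r Rabs_mult => ?.
apply: Rmult_le_compat_r => //; apply: Rabs_pos.
Qed.

Lemma loc_lip n (g : vec n -> R) (dg : 'I_n -> vec n -> R) (p x z : vec n) rho eta M :
  (forall j y, has_partial g y j (dg j y)) ->
  (forall xi, close rho xi p -> forall j, Rabs (dg j xi - dg j p) <= eta) ->
  (forall j, Rabs (dg j p) <= M) ->
  close rho x p -> close rho z p ->
  Rabs (g z - g x) <= (M + eta) * nrm (fun j => z j - x j).
Proof.
move=> Hp Hc HM Hx Hz. have H1 := lin_err Hp Hc Hx Hz.
have H2 : Rabs (sumI (fun j => dg j p * (z j - x j))) <= M * nrm (fun j => z j - x j).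
  apply: sumI_bound => j. rewrite Rabs_mult. apply: Rmult_le_compat_r; [apply: Rabs_pos | apply: HM].
have := Rabs_triang (g z - g x - sumI (fun j => dg j p * (z j - x j))) (sumI (fun j => dg j p * (z j - x j))).
have -> : g z - g x - sumI (fun j => dg j p * (z j - x j)) + sumI (fun j => dg j p * (z j - x j)) = g z - g x by ring.
move=> ?; lra.
Qed.

Lemma sec_diff n (g : vec n -> R) (dg : 'I_n -> vec n -> R) (p x1 x2 x3 : vec n) rho eta M :
  0 <= eta ->
  (forall j y, has_partial g y j (dg j y)) ->
  (forall xi, close rho xi p -> forall j, Rabs (dg j xi - dg j p) <= eta) ->
  (forall j, Rabs (dg j p) <= M) ->
  close rho x1 p -> close rho x2 p -> close rho x3 p ->
  Rabs (g x1 - g x2 - g x3 + g p) <=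
    (M + eta) * nrm (fun j => x1 j - x2 j - x3 j + p j) + 2 * eta * nrm (fun j => x2 j - p j).
Proof.
move=> Heta Hp Hc HM H1 H2 H3.
have Hpp : close rho p p by move=> k; rewrite Rminus_diag Rabs_R0; have := H1 k; move: (Rabs_pos (x1 k - p k)) => ?; lra.
have E1 := lin_err Hp Hc H3 H1.
have E2 := lin_err Hp Hc Hpp H2.
set L1 := sumI (fun j => dg j p * (x1 j - x3 j)).
set L2 := sumI (fun j => dg j p * (x2 j - p j)).
rewrite -/L1 in E1. rewrite -/L2 in E2.
have EL : L1 - L2 = sumI (fun j => dg j p * (x1 j - x2 j - x3 j + p j)).
  rewrite /L1 /L2 -sumI_minus; apply: sumI_ext => j; ring.
have HL : Rabs (L1 - L2) <= M * nrm (fun j => x1 j - x2 j - x3 j + p j).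
  rewrite EL. apply: sumI_bound => j. rewrite Rabs_mult. apply: Rmult_le_compat_r; [apply: Rabs_pos | apply: HM].
have Hn1 : nrm (fun j => x1 j - x3 j) <= nrm (fun j => x1 j - x2 j - x3 j + p j) + nrm (fun j => x2 j - p j).
  rewrite -(nrm_ext (u := fun j => (x1 j - x2 j - x3 j + p j) + (x2 j - p j))); first by apply: nrm_triang.
  move=> j; ring.
have T1 := Rabs_triang (g x1 - g x3 - L1) (- (g x2 - g p - L2)).
have T2 := Rabs_triang ((g x1 - g x3 - L1) + - (g x2 - g p - L2)) (L1 - L2).
rewrite Rabs_Ropp in T1.
have -> : g x1 - g x2 - g x3 + g p = (g x1 - g x3 - L1) + - (g x2 - g p - L2) + (L1 - L2) by ring.
have : eta * nrm (fun j => x1 j - x3 j) <= eta * (nrm (fun j => x1 j - x2 j - x3 j + p j) + nrm (fun j => x2 j - p j))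
  by apply: Rmult_le_compat_l.
move=> ?; lra.
Qed.

Lemma dpl_plus f g x a b : derivable_pt_lim f x a -> derivable_pt_lim g x b ->
  derivable_pt_lim (fun h => f h + g h) x (a + b).
Proof. move=> H1 H2; exact: (derivable_pt_lim_plus f g x a b H1 H2). Qed.
Lemma dpl_minus f g x a b : derivable_pt_lim f x a -> derivable_pt_lim g x b ->
  derivable_pt_lim (fun h => f h - g h) x (a - b).
Proof. move=> H1 H2; exact: (derivable_pt_lim_minus f g x a b H1 H2). Qed.
Lemma dpl_scal c f x a : derivable_pt_lim f x a -> derivable_pt_lim (fun h => c * f h) x (c * a).
Proof. move=> H1; exact: (derivable_pt_lim_scal f c x a H1). Qed.

Lemma dpl_sum m (F : 'I_m -> R -> R) x (l : 'I_m -> R) :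
  (forall i, derivable_pt_lim (F i) x (l i)) ->
  derivable_pt_lim (fun h => sumI (fun i => F i h)) x (sumI l).
Proof.
move=> H eps Heps.
set e' := eps / (INR m + 1).
have Hm := pos_INR m.
have He' : 0 < e' by rewrite /e'; apply: Rdiv_lt_0_compat; lra.
have [d [Hd Hd2]] := fin_min_ex (P := fun i d => forall h, h <> 0 -> Rabs h < d ->
     Rabs ((F i (x + h) - F i x) / h - l i) < e')
  ltac:(move=> i d d' Hi Hd' h Hh Hhd; apply: Hi => //; lra)
  (fun i => match H i e' He' with ex_intro d Hd => ex_intro _ (pos d) (conj (cond_pos d) Hd) end).
exists (mkposreal d Hd) => h Hh Hhd /=.
have E : (sumI (fun i => F i (x + h)) - sumI (fun i => F i x)) / h - sumI l =
         sumI (fun i => (F i (x + h) - F i x) / h - l i).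
  have E1 : sumI (fun i => (F i (x + h) - F i x) / h - l i) =
            sumI (fun i => / h * (F i (x + h) - F i x)) - sumI l.
    rewrite -sumI_minus; apply: sumI_ext => i; rewrite /Rdiv; ring.
  rewrite E1 sumI_scal sumI_minus /Rdiv; ring.
rewrite E. apply: Rle_lt_trans (sumI_abs _) _.
apply: (Rle_lt_trans _ (sumI (fun _ : 'I_m => e'))).
  apply: sumI_le => i; left; apply: Hd2 => //.
rewrite sumI_const /e'.
have -> : INR m * (eps / (INR m + 1)) = eps * (INR m / (INR m + 1)) by field; lra.
have : INR m / (INR m + 1) < 1.
  have -> : INR m / (INR m + 1) = 1 - 1 / (INR m + 1) by field; lra.
  have : 0 < 1 / (INR m + 1) by apply: Rdiv_lt_0_compat; lra.
  move=> ?; lra.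
move=> ?; nra.
Qed.

Lemma cont_sum n m (F : 'I_m -> vec n -> R) :
  (forall i, cont_Rn (F i)) -> cont_Rn (fun y => sumI (fun i => F i y)).
Proof.
move=> H x eps Heps.
set e' := eps / (INR m + 1).
have Hm := pos_INR m.
have He' : 0 < e' by rewrite /e'; apply: Rdiv_lt_0_compat; lra.
have [d [Hd Hd2]] := fin_min_ex (P := fun i d => forall y, (forall k, Rabs (y k - x k) < d) ->
     Rabs (F i y - F i x) < e')
  ltac:(move=> i d d' Hi Hd' y Hy; apply: Hi => k; have := Hy k; lra)
  (fun i => H i x e' He').
exists d; split => // y Hy.
rewrite -sumI_minus. apply: Rle_lt_trans (sumI_abs _) _.
apply: (Rle_lt_trans _ (sumI (fun _ : 'I_m => e'))).
  apply: sumI_le => i; left; apply: Hd2 => //.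
rewrite sumI_const /e'.
have -> : INR m * (eps / (INR m + 1)) = eps * (INR m / (INR m + 1)) by field; lra.
have : INR m / (INR m + 1) < 1.
  have -> : INR m / (INR m + 1) = 1 - 1 / (INR m + 1) by field; lra.
  have : 0 < 1 / (INR m + 1) by apply: Rdiv_lt_0_compat; lra.
  move=> ?; lra.
move=> ?; nra.
Qed.

Lemma cont_plus n (f g : vec n -> R) : cont_Rn f -> cont_Rn g -> cont_Rn (fun y => f y + g y).
Proof.
move=> Hf Hg x eps Heps.
have [d1 [Hd1 H1]] := Hf x (eps/2) ltac:(lra).
have [d2 [Hd2 H2]] := Hg x (eps/2) ltac:(lra).
exists (Rmin d1 d2); split; first by apply: Rmin_glb_lt.
move=> y Hy.
have := H1 y (fun k => Rlt_le_trans _ _ _ (Hy k) (Rmin_l _ _)).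
have := H2 y (fun k => Rlt_le_trans _ _ _ (Hy k) (Rmin_r _ _)).
move=> ? ?. have -> : f y + g y - (f x + g x) = (f y - f x) + (g y - g x) by ring.
have := Rabs_triang (f y - f x) (g y - g x). lra.
Qed.

Lemma cont_scal n c (f : vec n -> R) : cont_Rn f -> cont_Rn (fun y => c * f y).
Proof.
move=> Hf x eps Heps.
have Hc := Rabs_pos c.
have [d [Hd H]] := Hf x (eps / (Rabs c + 1)) ltac:(apply: Rdiv_lt_0_compat; lra).
exists d; split => // y Hy. have := H y Hy => H'.
rewrite -Rmult_minus_distr_l Rabs_mult.
apply: (Rle_lt_trans _ (Rabs c * (eps / (Rabs c + 1)))).
  apply: Rmult_le_compat_l; lra.
have -> : Rabs c * (eps / (Rabs c + 1)) = eps * (Rabs c / (Rabs c + 1)) by field; lra.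
have : Rabs c / (Rabs c + 1) < 1.
  have -> : Rabs c / (Rabs c + 1) = 1 - 1 / (Rabs c + 1) by field; lra.
  have : 0 < 1 / (Rabs c + 1) by apply: Rdiv_lt_0_compat; lra.
  move=> ?; lra.
move=> ?; nra.
Qed.

Lemma C1_cont n (g : vec n -> R) dg :
  (forall j x, has_partial g x j (dg j x)) -> (forall j, cont_Rn (dg j)) -> cont_Rn g.
Proof.
move=> Hp Hc x eps Heps.
have [d0 [Hd0 H0]] := fin_min_ex (P := fun j d => forall y, (forall k, Rabs (y k - x k) < d) ->
     Rabs (dg j y - dg j x) < 1)
  ltac:(move=> j d d' Hj Hd' y Hy; apply: Hj => k; have := Hy k; lra)
  (fun j => Hc j x 1 Rlt_0_1).
set M := sumI (fun j => Rabs (dg j x)).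
have HM : forall j, Rabs (dg j x) <= M by move=> j; apply: (@sumI_single n (fun j => Rabs (dg j x)) j) => i; apply: Rabs_pos.
have HM0 : 0 <= M by apply: sumI_ge0 => j; apply: Rabs_pos.
have Hn := pos_INR n.
have Hcl : forall xi, close (d0/2) xi x -> forall j, Rabs (dg j xi - dg j x) <= 1.
  move=> xi Hxi j; left; apply: H0 => k; move: (Hxi k) => ?; lra.
set d := Rmin (d0/2) (eps / ((M + 1) * (INR n + 1))).
have Hd : 0 < d by apply: Rmin_glb_lt; [lra | apply: Rdiv_lt_0_compat; nra].
exists d; split => // y Hy.
have Hyc : close (d0/2) y x by move=> k; move: (Hy k) (Rmin_l (d0/2) (eps / ((M + 1) * (INR n + 1)))); rewrite -/d => ? ?; lra.
have Hxc : close (d0/2) x x by move=> k; rewrite Rminus_diag Rabs_R0; lra.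
have H1 := loc_lip Hp Hcl HM Hxc Hyc.
have H2 : nrm (fun j => y j - x j) <= INR n * d by apply: nrm_le_const => k; left; apply: Hy.
have H3 : d <= eps / ((M + 1) * (INR n + 1)) by apply: Rmin_r.
have H4 : (M + 1) * (INR n * d) <= (M + 1) * (INR n * (eps / ((M + 1) * (INR n + 1)))).
  apply: Rmult_le_compat_l; first lra. apply: Rmult_le_compat_l => //.
have E5 : (M + 1) * (INR n * (eps / ((M + 1) * (INR n + 1)))) = eps * (INR n / (INR n + 1)) by field; lra.
have H6 : INR n / (INR n + 1) < 1.
  have -> : INR n / (INR n + 1) = 1 - 1 / (INR n + 1) by field; lra.
  have : 0 < 1 / (INR n + 1) by apply: Rdiv_lt_0_compat; lra.
  move=> ?; lra.
have H7 : (M + 1) * nrm (fun j => y j - x j) <= (M + 1) * (INR n * d) by apply: Rmult_le_compat_l; lra.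
have H8 : eps * (INR n / (INR n + 1)) < eps by nra.
lra.
Qed.

Lemma C2_C1 n (g : vec n -> R) : C2_Rn g -> C1_Rn g.
Proof.
move=> [dg [H1 H2]]. exists dg; split => // j.
have [ddg [H3 H4]] := H2 j. exact: C1_cont H3 H4.
Qed.

Lemma C1_cont' n (g : vec n -> R) : C1_Rn g -> cont_Rn g.
Proof. move=> [dg [H1 H2]]; exact: C1_cont H1 H2. Qed.

Definition comb m n (g0 : vec n -> R) (g : 'I_m -> vec n -> R) (b : vec m) (y : vec n) : R :=
  g0 y + sumI (fun i => b i * (g i y - g0 y)).

Lemma C1_comb m n (g0 : vec n -> R) (g : 'I_m -> vec n -> R) (b : vec m) :
  C1_Rn g0 -> (forall i, C1_Rn (g i)) -> C1_Rn (comb g0 g b).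
Proof.
move=> [dg0 [H01 H02]] Hg.
pose dg := fun i => proj1_sig (constructive_indefinite_description _ (Hg i)).
have Hdg : forall i, (forall j x, has_partial (g i) x j (dg i j x)) /\ (forall j, cont_Rn (dg i j)).
  move=> i; rewrite /dg; case: (constructive_indefinite_description _ _) => //=.
exists (fun j y => dg0 j y + sumI (fun i => b i * (dg i j y - dg0 j y))); split.
- move=> j x. rewrite /has_partial /comb.
  apply: dpl_plus; first exact: H01.
  apply: (dpl_sum (F := fun i h => b i * (g i (vadd x (scal_unit j h)) - g0 (vadd x (scal_unit j h))))) => i.
  apply: dpl_scal. apply: dpl_minus; [apply: (proj1 (Hdg i)) | apply: H01].
- move=> j. apply: cont_plus => //. apply: (cont_sum (F := fun i y => b i * (dg i j y - dg0 j y))) => i.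
  apply: cont_scal. have -> : (fun y => dg i j y - dg0 j y) = (fun y => dg i j y + (-1) * dg0 j y)
    by apply: functional_extensionality => y; ring.
  apply: cont_plus; [exact: (proj2 (Hdg i)) | apply: cont_scal; exact: H02].
Qed.

Definition ctraj n T (p : R -> vec n) := forall t, 0 <= t <= T -> forall e, 0 < e ->
  exists d, 0 < d /\ forall s, 0 <= s <= T -> Rabs (s - t) < d -> forall k, Rabs (p s k - p t k) < e.

Lemma dw_ctraj n T (p : R -> vec n) (v : R -> vec n) :
  (forall t, 0 <= t <= T -> forall k, deriv_within T (fun s => p s k) t (v t k)) -> ctraj T p.
Proof.
move=> H t Ht e He.
have Hk : forall k, exists d, 0 < d /\ forall s, 0 <= s <= T -> Rabs (s - t) < d ->
     Rabs (p s k - p t k) < e.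
  move=> k. have [d1 [Hd1 H1]] := dw_approx (H t Ht k) Rlt_0_1.
  have Hv := Rabs_pos (v t k).
  exists (Rmin d1 (e / (Rabs (v t k) + 2))); split.
    apply: Rmin_glb_lt => //; apply: Rdiv_lt_0_compat; lra.
  move=> s Hs Hst.
  have Hst1 : Rabs (s - t) < d1 by move: (Rmin_l d1 (e / (Rabs (v t k) + 2))) => ?; lra.
  have Hst2 : Rabs (s - t) < e / (Rabs (v t k) + 2) by move: (Rmin_r d1 (e / (Rabs (v t k) + 2))) => ?; lra.
  have H3 := H1 s Hs Hst1. rewrite Rmult_1_l in H3.
  have H4 : Rabs (p s k - p t k) <= (Rabs (v t k) + 1) * Rabs (s - t).
    have := Rabs_triang (p s k - p t k - v t k * (s - t)) (v t k * (s - t)).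
    rewrite Rabs_mult. have -> : p s k - p t k - v t k * (s - t) + v t k * (s - t) = p s k - p t k by ring.
    move=> ?; lra.
  have H5 : (Rabs (v t k) + 1) * Rabs (s - t) <= (Rabs (v t k) + 1) * (e / (Rabs (v t k) + 2)).
    apply: Rmult_le_compat_l; lra.
  have H6 : (Rabs (v t k) + 1) * (e / (Rabs (v t k) + 2)) < e.
    have -> : (Rabs (v t k) + 1) * (e / (Rabs (v t k) + 2)) = e - e / (Rabs (v t k) + 2) by field; lra.
    have : 0 < e / (Rabs (v t k) + 2) by apply: Rdiv_lt_0_compat; lra.
    move=> ?; lra.
  lra.
have [d [Hd H2]] := fin_min_ex (P := fun k d => forall s, 0 <= s <= T -> Rabs (s - t) < d ->
     Rabs (p s k - p t k) < e)
  ltac:(move=> k d d' Hk' Hd' s Hs Hst; apply: Hk' => //; lra) Hk.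
by exists d; split => // s Hs Hst k; apply: H2.
Qed.

Lemma unif1 n T (p : R -> vec n) (h : vec n -> R) : 0 <= T -> cont_Rn h -> ctraj T p ->
  forall eta, 0 < eta -> exists rho, 0 < rho /\ forall t, 0 <= t <= T -> forall xi,
    close rho xi (p t) -> Rabs (h xi - h (p t)) <= eta.
Proof.
move=> HT Hh Hp eta Heta.
apply: (l2g (Q := fun t rho => forall xi, close rho xi (p t) -> Rabs (h xi - h (p t)) <= eta)) => //.
  move=> t d d' H Hd xi Hxi. apply: H => k; have := Hxi k; lra.
move=> t0 Ht0.
have [d0 [Hd0 H0]] := Hh (p t0) (eta/2) ltac:(lra).
have [d1 [Hd1 H1]] := Hp t0 Ht0 (d0/2) ltac:(lra).
exists d1, (d0/4); split => //; split; first lra.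
move=> t Ht Htt0 xi Hxi.
have Ha : Rabs (h xi - h (p t0)) < eta / 2.
  apply: H0 => k. have := Hxi k. have := H1 t Ht Htt0 k.
  have := Rabs_triang (xi k - p t k) (p t k - p t0 k).
  have -> : xi k - p t k + (p t k - p t0 k) = xi k - p t0 k by ring.
  move=> ? ? ?; lra.
have Hb : Rabs (h (p t) - h (p t0)) < eta / 2.
  apply: H0 => k. have := H1 t Ht Htt0 k. lra.
have := Rabs_triang (h xi - h (p t0)) (- (h (p t) - h (p t0))).
rewrite Rabs_Ropp.
have -> : h xi - h (p t0) + - (h (p t) - h (p t0)) = h xi - h (p t) by ring.
move=> ?; lra.
Qed.

Lemma bound1 n T (p : R -> vec n) (h : vec n -> R) : 0 <= T -> cont_Rn h -> ctraj T p ->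
  exists M, 0 <= M /\ forall t, 0 <= t <= T -> Rabs (h (p t)) <= M.
Proof.
move=> HT Hh Hp.
have [d [Hd H]] := l2g (T := T) (Q := fun t d => Rabs (h (p t)) <= / d) HT
  ltac:(move=> t d d' H Hd; apply: Rle_trans H _; apply: Rinv_le_contravar; lra)
  ltac:(move=> t0 Ht0;
    have [d0 [Hd0 H0]] := Hh (p t0) 1 Rlt_0_1;
    have [d1 [Hd1 H1]] := Hp t0 Ht0 d0 Hd0;
    exists d1, (/ (Rabs (h (p t0)) + 1));
    split => //; split; [apply: Rinv_0_lt_compat; move: (Rabs_pos (h (p t0))) => ?; lra|];
    move=> t Ht Htt0; rewrite Rinv_inv;
    have := H0 (p t) (H1 t Ht Htt0);
    have := Rabs_triang_inv (h (p t)) (h (p t0)); move=> ? ?; lra).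
exists (/ d); split; [left; apply: Rinv_0_lt_compat | ] => //.
Qed.

Lemma fin_max_ex m (P : 'I_m -> R -> Prop) :
  (forall k M M', P k M -> M <= M' -> P k M') ->
  (forall k, exists M, P k M) -> exists M, 0 <= M /\ forall k, P k M.
Proof.
move=> Hm H.
pose F := fun k => proj1_sig (constructive_indefinite_description _ (H k)).
have HF : forall k, P k (F k).
  move=> k; rewrite /F; case: (constructive_indefinite_description _ _) => //=.
exists (sumI (fun k => Rabs (F k))); split; first by apply: sumI_ge0 => k; apply: Rabs_pos.
move=> k. apply: (Hm k (F k)) => //.
apply: Rle_trans (Rle_abs _) _. apply: (@sumI_single m (fun k => Rabs (F k)) k) => i; apply: Rabs_pos.
Qed.

Lemma fam_C1 N n T (p : R -> vec n) (g : 'I_N -> vec n -> R) :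
  0 <= T -> ctraj T p -> (forall i, C1_Rn (g i)) ->
  exists dg : 'I_N -> 'I_n -> vec n -> R,
    (forall i j x, has_partial (g i) x j (dg i j x)) /\
    (exists M, 0 <= M /\ forall i j t, 0 <= t <= T -> Rabs (dg i j (p t)) <= M) /\
    (forall eta, 0 < eta -> exists rho, 0 < rho /\ forall i t, 0 <= t <= T -> forall xi,
        close rho xi (p t) -> forall j, Rabs (dg i j xi - dg i j (p t)) <= eta).
Proof.
move=> HT Hp Hg.
pose dg := fun i => proj1_sig (constructive_indefinite_description _ (Hg i)).
have Hdg : forall i, (forall j x, has_partial (g i) x j (dg i j x)) /\ (forall j, cont_Rn (dg i j)).
  move=> i; rewrite /dg; case: (constructive_indefinite_description _ _) => //=.
exists dg; split; [|split].
- move=> i j x; apply: (proj1 (Hdg i)).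
- have [M [HM HM2]] := fin_max_ex (P := fun i M => forall j t, 0 <= t <= T -> Rabs (dg i j (p t)) <= M)
    ltac:(move=> i M M' H HMM j t Ht; apply: Rle_trans (H j t Ht) HMM)
    (fun i => match fin_max_ex (P := fun j M => forall t, 0 <= t <= T -> Rabs (dg i j (p t)) <= M)
        (fun j M M' H HMM t Ht => Rle_trans _ _ _ (H t Ht) HMM)
        (fun j => match bound1 HT (proj2 (Hdg i) j) Hp with ex_intro M (conj _ H) => ex_intro _ M H end)
      with ex_intro M (conj _ H) => ex_intro _ M H end).
  exists M; split => // i j t Ht; exact: HM2.
- move=> eta Heta.
  have [rho [Hr H]] := fin_min_ex (P := fun i rho => forall t, 0 <= t <= T -> forall xi,
        close rho xi (p t) -> forall j, Rabs (dg i j xi - dg i j (p t)) <= eta)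
    ltac:(move=> i d d' H Hd t Ht xi Hxi j; apply: H => // k; have := Hxi k; lra)
    (fun i => match fin_min_ex (P := fun j rho => forall t, 0 <= t <= T -> forall xi,
        close rho xi (p t) -> Rabs (dg i j xi - dg i j (p t)) <= eta)
        ltac:(move=> j d d' H Hd t Ht xi Hxi; apply: H => // k; have := Hxi k; lra)
        (fun j => unif1 HT (proj2 (Hdg i) j) Hp Heta)
      with ex_intro rho (conj Hr H) => ex_intro _ rho (conj Hr (fun t Ht xi Hxi j => H j t Ht xi Hxi)) end).
  exists rho; split => //.
Qed.

Lemma fam_LN N n T (p : R -> vec n) (g : 'I_N -> vec n -> R) :
  0 <= T -> ctraj T p -> (forall i, C1_Rn (g i)) ->
  exists rho L, 0 < rho /\ 0 <= L /\ forall i t, 0 <= t <= T -> forall x z,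
    close rho x (p t) -> close rho z (p t) -> Rabs (g i z - g i x) <= L * nrm (fun j => z j - x j).
Proof.
move=> HT Hp Hg. have [dg [H1 [[M [HM HM2]] H3]]] := fam_C1 HT Hp Hg.
have [rho [Hr H4]] := H3 1 Rlt_0_1.
exists rho, (M + 1); split => //; split; first lra.
move=> i t Ht x z Hx Hz. apply: (loc_lip (H1 i) (H4 i t Ht)) => // j. exact: HM2.
Qed.

Lemma fam_SD N n T (p : R -> vec n) (g : 'I_N -> vec n -> R) :
  0 <= T -> ctraj T p -> (forall i, C1_Rn (g i)) ->
  exists M, 0 <= M /\ forall eta, 0 < eta -> exists rho, 0 < rho /\
    forall i t, 0 <= t <= T -> forall x1 x2 x3,
    close rho x1 (p t) -> close rho x2 (p t) -> close rho x3 (p t) ->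
    Rabs (g i x1 - g i x2 - g i x3 + g i (p t)) <=
      (M + eta) * nrm (fun j => x1 j - x2 j - x3 j + p t j) + 2 * eta * nrm (fun j => x2 j - p t j).
Proof.
move=> HT Hp Hg. have [dg [H1 [[M [HM HM2]] H3]]] := fam_C1 HT Hp Hg.
exists M; split => // eta Heta.
have [rho [Hr H4]] := H3 eta Heta.
exists rho; split => // i t Ht x1 x2 x3 Hx1 Hx2 Hx3.
exact: (sec_diff (ltac:(lra) : 0 <= eta) (H1 i) (H4 i t Ht) (fun j => HM2 i j t Ht) Hx1 Hx2 Hx3).
Qed.

Lemma comb_diff_beta m n (g0 : vec n -> R) (g : 'I_m -> vec n -> R) b b' y :
  comb g0 g b y - comb g0 g b' y = sumI (fun i => (b i - b' i) * (g i y - g0 y)).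
Proof.
rewrite /comb. rewrite (_ : forall A B C, A + B - (A + C) = B - C); last by move=> *; ring.
rewrite -sumI_minus. apply: sumI_ext => i; ring.
Qed.

Lemma comb_affine m n (g0 : vec n -> R) (g : 'I_m -> vec n -> R) (a x : vec m) e y :
  comb g0 g (fun i => a i + e * x i) y = comb g0 g a y + e * (comb g0 g (fun i => a i + x i) y - comb g0 g a y).
Proof.
rewrite !comb_diff_beta.
have -> : comb g0 g (fun i => a i + e * x i) y = comb g0 g a y + (comb g0 g (fun i => a i + e * x i) y - comb g0 g a y) by ring.
rewrite comb_diff_beta -sumI_scal. f_equal. apply: sumI_ext => i; ring.
Qed.

Lemma comb_lip m n (g0 : vec n -> R) (g : 'I_m -> vec n -> R) b x y B :
  in_box b -> Rabs (g0 x - g0 y) <= B -> (forall i, Rabs (g i x - g i y) <= B) ->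
  Rabs (comb g0 g b x - comb g0 g b y) <= (1 + 2 * INR m) * B.
Proof.
move=> Hb H0 Hi.
have HB : 0 <= B by move: (Rabs_pos (g0 x - g0 y)) => ?; lra.
have E : comb g0 g b x - comb g0 g b y =
  (g0 x - g0 y) + sumI (fun i => b i * ((g i x - g i y) - (g0 x - g0 y))).
  rewrite /comb. rewrite (_ : forall a c d e, a + c - (d + e) = (a - d) + (c - e)); last by move=> *; ring.
  f_equal. rewrite -sumI_minus. apply: sumI_ext => i; ring.
rewrite E. apply: Rle_trans (Rabs_triang _ _) _.
have : Rabs (sumI (fun i => b i * ((g i x - g i y) - (g0 x - g0 y)))) <= INR m * (2 * B).
  apply: Rle_trans (sumI_abs _) _. rewrite -sumI_const. apply: sumI_le => i.
  rewrite Rabs_mult. have [Hb1 Hb2] := Hb i.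
  have : Rabs (g i x - g i y - (g0 x - g0 y)) <= 2 * B.
    apply: Rle_trans (Rabs_triang _ _) _. rewrite Rabs_Ropp. move: (Hi i) => ?; lra.
  move=> ?. rewrite (Rabs_right (b i)); last lra. have : b i * Rabs (g i x - g i y - (g0 x - g0 y)) <= 1 * (2 * B).
    apply: Rmult_le_compat; [lra | apply: Rabs_pos | lra | lra].
  move=> ?; lra.
move=> ?; lra.
Qed.

Lemma comb_beta_bound m n (g0 : vec n -> R) (g : 'I_m -> vec n -> R) b b' y Mg :
  (forall i, Rabs (g i y - g0 y) <= Mg) ->
  Rabs (comb g0 g b y - comb g0 g b' y) <= Mg * nrm (fun i => b i - b' i).
Proof.
move=> H. rewrite comb_diff_beta. apply: sumI_bound => i.
rewrite Rabs_mult Rmult_comm. apply: Rmult_le_compat_r; [apply: Rabs_pos | apply: H].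
Qed.

Record core n m T (X : vec n -> Prop) (x0 : vec n) (f : vec n -> vec m -> vec n)
  (r : vec n -> vec m -> R) (q : vec n -> R) : Prop := Core {
  cT : 0 < T;
  cf0 : forall k, C1_Rn (fun y : vec n => f y (vzero m) k);
  cfi : forall (i : 'I_m) k, C1_Rn (fun y : vec n => f y (unitv i) k);
  lf0 : lipschitz_on X (fun y => f y (vzero m));
  lfi : forall i, lipschitz_on X (fun y => f y (unitv i));
  cr0 : C1_Rn (fun y => r y (vzero m));
  cri : forall i, C1_Rn (fun y => r y (unitv i));
  cq : C1_Rn q;
  csol : forall a, in_box a -> ex_uniq_sol X T x0 (fun y => fhat f y a) }.

Lemma solves_dw n (X : vec n -> Prop) T x0 F y : solves X T x0 F y ->
  forall t, 0 <= t <= T -> forall k, deriv_within T (fun s => y s k) t (F (y t) k).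
Proof. move=> [_ H] t Ht k; exact: (proj2 (H t Ht) k). Qed.

Lemma solves_X n (X : vec n -> Prop) T x0 F y : solves X T x0 F y ->
  forall t, 0 <= t <= T -> X (y t).
Proof. move=> [_ H] t Ht; exact: (proj1 (H t Ht)). Qed.

Lemma dw_lin T g h t a b c : deriv_within T g t a -> deriv_within T h t b ->
  deriv_within T (fun s => g s + c * h s) t (a + c * b).
Proof.
move=> Hg Hh e He.
have [d1 [Hd1 H1]] := Hg (e / (2 * (Rabs c + 1))) ltac:(apply: Rdiv_lt_0_compat; move: (Rabs_pos c) => ?; lra).
have [d2 [Hd2 H2]] := Hh (e / (2 * (Rabs c + 1))) ltac:(apply: Rdiv_lt_0_compat; move: (Rabs_pos c) => ?; lra).
exists (Rmin d1 d2); split; first by apply: Rmin_glb_lt.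
move=> s Hs Hst Hsd.
have Hne : s - t <> 0 by lra.
have := H1 s Hs Hst (Rlt_le_trans _ _ _ Hsd (Rmin_l _ _)).
have := H2 s Hs Hst (Rlt_le_trans _ _ _ Hsd (Rmin_r _ _)).
move=> A B.
have -> : (g s + c * h s - (g t + c * h t)) / (s - t) - (a + c * b) =
          ((g s - g t) / (s - t) - a) + c * ((h s - h t) / (s - t) - b) by field.
apply: Rle_lt_trans (Rabs_triang _ _) _. rewrite Rabs_mult.
have Hc := Rabs_pos c.
have : Rabs c * Rabs ((h s - h t) / (s - t) - b) <= Rabs c * (e / (2 * (Rabs c + 1))).
  apply: Rmult_le_compat_l; lra.
have : Rabs c * (e / (2 * (Rabs c + 1))) <= e / 2.
  have -> : Rabs c * (e / (2 * (Rabs c + 1))) = e / 2 * (Rabs c / (Rabs c + 1)) by field; lra.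
  have : Rabs c / (Rabs c + 1) <= 1.
    have -> : Rabs c / (Rabs c + 1) = 1 - 1 / (Rabs c + 1) by field; lra.
    have : 0 < 1 / (Rabs c + 1) by apply: Rdiv_lt_0_compat; lra.
    move=> ?; lra.
  move=> ?; nra.
have : e / (2 * (Rabs c + 1)) <= e / 2.
  apply: Rmult_le_compat_l; first lra. apply: Rinv_le_contravar; lra.
move=> ? ? ?; lra.
Qed.

Lemma cont_minus n (f g : vec n -> R) : cont_Rn f -> cont_Rn g -> cont_Rn (fun y => f y - g y).
Proof.
move=> Hf Hg. have -> : (fun y => f y - g y) = (fun y => f y + (-1) * g y)
  by apply: functional_extensionality => y; ring.
apply: cont_plus => //; exact: cont_scal.
Qed.

Lemma lipX_fhat n m T X x0 f r q (H : @core n m T X x0 f r q) :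
  exists L, 0 <= L /\ forall b, in_box b -> forall x y, X x -> X y -> forall k,
    Rabs (fhat f x b k - fhat f y b k) <= L * nrm (fun j => x j - y j).
Proof.
have [L0 [HL0 H0]] := lf0 H.
have [Lm [HLm Hm]] := fin_max_ex (P := fun i L => forall x y, X x -> X y -> forall d,
    (forall k, Rabs (x k - y k) <= d) -> forall k, Rabs (f x (unitv i) k - f y (unitv i) k) <= L * d)
  ltac:(move=> i L L' HL HLL x y Hx Hy d Hd k; apply: Rle_trans (HL x y Hx Hy d Hd k) _;
        apply: Rmult_le_compat_r => //; apply: Rle_trans (Rabs_pos (x k - y k)) (Hd k))
  (fun i => match lfi H i with ex_intro L (conj _ HL) => ex_intro _ L HL end).
exists ((1 + 2 * INR m) * ((L0 + Lm) * 1)); split.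
  apply: Rmult_le_pos; [move: (pos_INR m) => ?; lra | lra].
move=> b Hb x y Hx Hy k.
have Hd : forall k, Rabs (x k - y k) <= nrm (fun j => x j - y j) by move=> k'; apply: (nrm_comp (fun j => x j - y j)).
have Hn := nrm_ge0 (fun j => x j - y j).
rewrite Rmult_assoc.
apply: (comb_lip (g0 := fun y => f y (vzero m) k) (g := fun i y => f y (unitv i) k)) => //.
- apply: Rle_trans (H0 x y Hx Hy _ Hd k) _. rewrite Rmult_1_r. apply: Rmult_le_compat_r => //; lra.
- move=> i. apply: Rle_trans (Hm i x y Hx Hy _ Hd k) _. rewrite Rmult_1_r. apply: Rmult_le_compat_r => //; lra.
Qed.

Lemma fdiff_bound n m T X x0 f r q (H : @core n m T X x0 f r q) (p : R -> vec n) :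
  ctraj T p -> exists Mf, 0 <= Mf /\ forall t, 0 <= t <= T -> forall (i : 'I_m) k,
    Rabs (f (p t) (unitv i) k - f (p t) (vzero m) k) <= Mf.
Proof.
move=> Hp. have HT : 0 <= T by have := cT H; lra.
have [M [HM HM2]] := fin_max_ex (P := fun i M => forall t, 0 <= t <= T -> forall k,
    Rabs (f (p t) (unitv i) k - f (p t) (vzero m) k) <= M)
  ltac:(move=> i M M' H1 HMM t Ht k; apply: Rle_trans (H1 t Ht k) HMM)
  (fun i => match fin_max_ex (P := fun k M => forall t, 0 <= t <= T ->
      Rabs (f (p t) (unitv i) k - f (p t) (vzero m) k) <= M)
      (fun k M M' H1 HMM t Ht => Rle_trans _ _ _ (H1 t Ht) HMM)
      (fun k => match bound1 HT (cont_minus (C1_cont' (cfi H i k)) (C1_cont' (cf0 H k))) Hp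
                with ex_intro M (conj _ H2) => ex_intro _ M H2 end)
    with ex_intro M (conj _ H2) => ex_intro _ M (fun t Ht k => H2 k t Ht) end).
exists M; split => // t Ht i k; exact: HM2.
Qed.

Lemma traj_lip n m T X x0 f r q (H : @core n m T X x0 f r q) (ab : vec m) (y0 : R -> vec n) :
  in_box ab -> solves X T x0 (fun y => fhat f y ab) y0 ->
  exists C, 0 <= C /\ forall b y, in_box b -> solves X T x0 (fun z => fhat f z b) y ->
    forall t, 0 <= t <= T -> nrm (fun k => y t k - y0 t k) <= C * nrm (fun i => b i - ab i).
Proof.
move=> Hab Hy0. have HT : 0 <= T by have := cT H; lra.
have Hp := dw_ctraj (solves_dw Hy0).
have [Mf [HMf HMf2]] := fdiff_bound H Hp.
have [L [HL HL2]] := lipX_fhat H.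
set K := INR n * L. set Mb := INR n * Mf.
have Hn := pos_INR n.
have HK : 0 <= K by rewrite /K; apply: Rmult_le_pos.
have HMb : 0 <= Mb by rewrite /Mb; apply: Rmult_le_pos.
exists (Mb * T * exp (K * T)); split.
  apply: Rmult_le_pos; [apply: Rmult_le_pos => // | left; apply: exp_pos].
move=> b y Hb Hy t Ht.
have Hnb := nrm_ge0 (fun i => b i - ab i).
have := @gronwall n T (fun s k => y s k - y0 s k)
  (fun s k => fhat f (y s) b k + (-1) * fhat f (y0 s) ab k) K 0 (Mb * nrm (fun i => b i - ab i))
  HT HK (Rle_refl 0) ltac:(apply: Rmult_le_pos => //).
have -> : Mb * T * exp (K * T) * nrm (fun i => b i - ab i) = (0 + Mb * nrm (fun i => b i - ab i) * T) * exp (K * T) by ring.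
apply => //.
- move=> s Hs k /=.
  have -> : (fun s0 => y s0 k - y0 s0 k) = (fun s0 => y s0 k + (-1) * y0 s0 k)
    by apply: functional_extensionality => s0; ring.
  refine (dw_lin (-1) _ _).
  exact (solves_dw Hy Hs k). exact (solves_dw Hy0 Hs k).
- move=> s Hs.
  rewrite /K /Mb.
  have -> : INR n * L * nrm (fun k => y s k - y0 s k) + INR n * Mf * nrm (fun i => b i - ab i)
          = sumI (fun _ : 'I_n => L * nrm (fun k => y s k - y0 s k) + Mf * nrm (fun i => b i - ab i)).
    rewrite sumI_const; ring.
  apply: sumI_le => k /=.
  have E : fhat f (y s) b k + (-1) * fhat f (y0 s) ab k =
           (fhat f (y s) b k - fhat f (y0 s) b k) + (fhat f (y0 s) b k - fhat f (y0 s) ab k) by ring.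
  rewrite E. apply: Rle_trans (Rabs_triang _ _) _. apply: Rplus_le_compat.
  + apply: HL2 => //; [exact: (solves_X Hy Hs) | exact: (solves_X Hy0 Hs)].
  + apply: (comb_beta_bound (g0 := fun z => f z (vzero m) k) (g := fun i z => f z (unitv i) k)).
    move=> i; exact: HMf2.
- have -> : (fun k => y 0 k - y0 0 k) = (fun k => 0).
    apply: functional_extensionality => k. by rewrite (proj1 Hy) (proj1 Hy0) Rminus_diag.
  rewrite /nrm (sumI_ext (G := fun _ => 0)) ?sumI_0; [lra | move=> k; exact: Rabs_R0].
Qed.

Lemma is_RInt_lin g h T I J l : 0 <= T -> is_RInt g 0 T I -> is_RInt h 0 T J ->
  is_RInt (fun t => g t + l * h t) 0 T (I + l * J).
Proof.
move=> HT [pr1 E1] [pr2 E2]. exists (RiemannInt_P10 l pr1 pr2).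
rewrite (RiemannInt_P12 pr1 pr2) // E1 E2 //.
Qed.

Lemma is_RInt_ext g h T I : 0 <= T -> is_RInt g 0 T I -> (forall t, 0 <= t <= T -> g t = h t) ->
  is_RInt h 0 T I.
Proof.
move=> HT [pr E] H.
have pr' : Riemann_integrable h 0 T.
  apply: (Riemann_integrable_ext h _ pr) => x. rewrite Rmin_left // Rmax_right //. apply: H.
exists pr'. rewrite -E. symmetry. apply: RiemannInt_P18 => // x Hx. apply: H; lra.
Qed.

Lemma is_RInt_unique g T I J : is_RInt g 0 T I -> is_RInt g 0 T J -> I = J.
Proof. move=> [pr1 <-] [pr2 <-]; apply: RiemannInt_P5. Qed.

Lemma is_RInt_bound g T I c : 0 <= T -> is_RInt g 0 T I -> (forall t, 0 <= t <= T -> Rabs (g t) <= c) ->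
  Rabs I <= c * T.
Proof.
move=> HT [pr <-] H.
have pr2 := RiemannInt_P16 pr.
apply: Rle_trans (RiemannInt_P17 pr pr2 HT) _.
have pr3 := RiemannInt_P14 0 T c.
apply: Rle_trans (RiemannInt_P19 pr2 pr3 HT _) _.
  move=> x Hx. rewrite /fct_cte. apply: H; lra.
rewrite RiemannInt_P15. lra.
Qed.

Definition clamp T t := Rmax 0 (Rmin T t).

Lemma clamp_in T t : 0 <= T -> 0 <= clamp T t <= T.
Proof. move=> HT; rewrite /clamp /Rmax /Rmin; repeat case: Rle_dec; lra. Qed.
Lemma clamp_id T t : 0 <= t <= T -> clamp T t = t.
Proof. move=> Ht; rewrite /clamp /Rmax /Rmin; repeat case: Rle_dec; lra. Qed.
Lemma clamp_lip T s t : 0 <= T -> Rabs (clamp T s - clamp T t) <= Rabs (s - t).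
Proof. move=> HT; rewrite /clamp /Rmax /Rmin; repeat case: Rle_dec; split_Rabs; lra. Qed.

Definition rcont T (g : R -> R) := forall t, 0 <= t <= T -> forall e, 0 < e ->
  exists d, 0 < d /\ forall s, 0 <= s <= T -> Rabs (s - t) < d -> Rabs (g s - g t) < e.

Lemma rcont_int g T : 0 <= T -> rcont T g -> exists I, is_RInt g 0 T I.
Proof.
move=> HT Hg.
have pr : Riemann_integrable (fun t => g (clamp T t)) 0 T.
  apply: continuity_implies_RiemannInt => // x _.
  rewrite /continuity_pt /continue_in /limit1_in /limit_in /= /R_dist => e He.
  have [d [Hd H]] := Hg (clamp T x) (clamp_in x HT) e He.
  exists d; split => // x' [_ Hx'].
  apply: H; first exact: clamp_in. apply: Rle_lt_trans (clamp_lip _ _ HT) Hx'.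
have pr' : Riemann_integrable g 0 T.
  apply: (Riemann_integrable_ext g _ pr) => x. rewrite Rmin_left // Rmax_right // => Hx.
  by rewrite clamp_id.
by exists (RiemannInt pr'), pr'.
Qed.

Lemma comp_rcont n T (h : vec n -> R) (p : R -> vec n) : cont_Rn h -> ctraj T p -> rcont T (fun t => h (p t)).
Proof.
move=> Hh Hp t Ht e He. have [d0 [Hd0 H0]] := Hh (p t) e He.
have [d [Hd H]] := Hp t Ht d0 Hd0. exists d; split => // s Hs Hst. apply: H0 => k. exact: H.
Qed.

Definition JhatY n m T (r : vec n -> vec m -> R) (q : vec n -> R) (b : vec m) (y : R -> vec n) (v : R) :=
  exists I, is_RInt (fun t => rhat r (y t) b) 0 T I /\ v = I + q (y T).

Lemma C1_rhat n m (r : vec n -> vec m -> R) b :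
  C1_Rn (fun y => r y (vzero m)) -> (forall i, C1_Rn (fun y => r y (unitv i))) ->
  C1_Rn (fun y => rhat r y b).
Proof. move=> H0 Hi. exact: (C1_comb (g0 := fun y => r y (vzero m)) (g := fun i y => r y (unitv i))). Qed.

Lemma C1_fhat n m (f : vec n -> vec m -> vec n) b k :
  (forall k, C1_Rn (fun y => f y (vzero m) k)) -> (forall i k, C1_Rn (fun y => f y (unitv i) k)) ->
  C1_Rn (fun y => fhat f y b k).
Proof. move=> H0 Hi. exact: (C1_comb (g0 := fun y => f y (vzero m) k) (g := fun i y => f y (unitv i) k)). Qed.

Lemma JhatY_ex n m T X x0 f r q (H : @core n m T X x0 f r q) b y :
  solves X T x0 (fun z => fhat f z b) y -> exists v, JhatY T r q b y v.
Proof.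
move=> Hy. have HT : 0 <= T by have := cT H; lra.
have [I HI] := rcont_int HT (comp_rcont (C1_cont' (C1_rhat b (cr0 H) (cri H))) (dw_ctraj (solves_dw Hy))).
exists (I + q (y T)), I; split => //.
Qed.

Lemma Jhat_JhatY n m T X x0 f r q b v : Jhat X T x0 f r q b v <->
  exists y, solves X T x0 (fun z => fhat f z b) y /\ @JhatY n m T r q b y v.
Proof. by []. Qed.

Lemma sol_eq n m T X x0 f r q (H : @core n m T X x0 f r q) b y1 y2 :
  in_box b -> solves X T x0 (fun z => fhat f z b) y1 -> solves X T x0 (fun z => fhat f z b) y2 ->
  forall t, 0 <= t <= T -> y1 t = y2 t.
Proof.
move=> Hb H1 H2 t Ht. apply: functional_extensionality => k.
exact: (proj2 (csol H Hb) y1 y2 H1 H2 t Ht k).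
Qed.

Lemma JhatY_uniq n m T X x0 f r q (H : @core n m T X x0 f r q) b y1 y2 v1 v2 :
  in_box b -> solves X T x0 (fun z => fhat f z b) y1 -> solves X T x0 (fun z => fhat f z b) y2 ->
  JhatY T r q b y1 v1 -> JhatY T r q b y2 v2 -> v1 = v2.
Proof.
move=> Hb H1 H2 [I1 [HI1 ->]] [I2 [HI2 ->]].
have HT : 0 <= T by have := cT H; lra.
have E := sol_eq H Hb H1 H2.
have HI1' : is_RInt (fun t => rhat r (y2 t) b) 0 T I1.
  apply: (is_RInt_ext HT HI1) => t Ht. by rewrite E.
rewrite (is_RInt_unique HI1' HI2) E //; lra.
Qed.

Lemma Jhat_uniq n m T X x0 f r q (H : @core n m T X x0 f r q) b v1 v2 :
  in_box b -> Jhat X T x0 f r q b v1 -> Jhat X T x0 f r q b v2 -> v1 = v2.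
Proof.
move=> Hb [y1 [H1 J1]] [y2 [H2 J2]]. exact: (JhatY_uniq H Hb H1 H2 J1 J2).
Qed.

Lemma Jhat_ex n m T X x0 f r q (H : @core n m T X x0 f r q) b :
  in_box b -> exists v, Jhat X T x0 f r q b v.
Proof.
move=> Hb. have [[y Hy] _] := csol H Hb. have [v Hv] := JhatY_ex H Hy. by exists v, y.
Qed.

Lemma rhat_affine n m (r : vec n -> vec m -> R) y (a x : vec m) e :
  rhat r y (fun i => a i + e * x i) = rhat r y a + e * (rhat r y (fun i => a i + x i) - rhat r y a).
Proof. exact: (comb_affine (fun y => r y (vzero m)) (fun i y => r y (unitv i))). Qed.

Lemma fhat_affine n m (f : vec n -> vec m -> vec n) y (a x : vec m) e k :
  fhat f y (fun i => a i + e * x i) k = fhat f y a k + e * (fhat f y (fun i => a i + x i) k - fhat f y a k).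
Proof. exact: (comb_affine (fun y => f y (vzero m) k) (fun i y => f y (unitv i) k)). Qed.

Lemma nrm_close n (x y : vec n) rho : nrm (fun k => x k - y k) <= rho -> close rho x y.
Proof. move=> H k. apply: Rle_trans (nrm_comp (fun k => x k - y k) k) H. Qed.

Lemma close_refl n (x : vec n) rho : 0 <= rho -> close rho x x.
Proof. move=> H k. rewrite Rminus_diag Rabs_R0 //. Qed.

Lemma nrm_dir m (a u : vec m) e : 0 <= e -> nrm (fun i => (a i + e * u i) - a i) = e * nrm u.
Proof.
move=> He. rewrite (nrm_ext (v := fun i => e * u i)); last by move=> i; ring.
rewrite nrm_scal Rabs_right //; lra.
Qed.

Lemma ctraj_const n T (c : vec n) : ctraj T (fun _ => c).
Proof. move=> t Ht e He. exists 1; split; first lra. move=> s Hs Hst k. rewrite Rminus_diag Rabs_R0 //. Qed.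

Lemma K1 n m T X x0 f r q (H : @core n m T X x0 f r q) (ab u : vec m) :
  in_box ab -> (forall e, 0 <= e <= 1 -> in_box (fun i => ab i + e * u i)) ->
  exists C e0, 0 < e0 /\ forall e, 0 < e <= e0 -> forall v v0,
    Jhat X T x0 f r q (fun i => ab i + e * u i) v -> Jhat X T x0 f r q ab v0 -> Rabs (v - v0) <= C * e.
Proof.
move=> Hab Hbox. have HT : 0 <= T by move: (cT H) => ?; lra.
have [[y0 Hy0] _] := csol H Hab.
have Hp := dw_ctraj (solves_dw Hy0).
have [C1 [HC1 HC1']] := traj_lip H Hab Hy0.
set Nu := nrm u. have HNu : 0 <= Nu by apply: nrm_ge0.
set Pr := fun y => rhat r y ab.
set Pru := fun y => rhat r y (fun i => ab i + u i).
have CPr : C1_Rn Pr by apply: C1_rhat; [exact: cr0 H | exact: cri H].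
have CPru : C1_Rn Pru by apply: C1_rhat; [exact: cr0 H | exact: cri H].
have [rho1 [L1 [Hr1 [HL1 HLN1]]]] := fam_LN (N := 1) (g := fun _ => Pr) HT Hp (fun _ => CPr).
have [rho2 [L2 [Hr2 [HL2 HLN2]]]] := fam_LN (N := 1) (g := fun _ => Pru) HT Hp (fun _ => CPru).
have [rho3 [L3 [Hr3 [HL3 HLN3]]]] := fam_LN (N := 1) (g := fun _ => q) (p := fun _ => y0 T) HT (@ctraj_const n T (y0 T)) (fun _ => cq H).
have [Bd [HBd HBd2]] := bound1 HT (cont_minus (C1_cont' CPru) (C1_cont' CPr)) Hp.
have [rho [Hr [Hr1' [Hr2' Hr3']]]] := min3 Hr1 Hr2 Hr3.
set A := C1 * Nu.
have HA : 0 <= A by apply: Rmult_le_pos.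
have [e0 [He0 [He01 [_ He02]]]] := min3 Rlt_0_1 Rlt_0_1 (ltac:(apply: Rdiv_lt_0_compat; lra) : 0 < rho / (A + 1)).
set Cin := L1 * A + Bd + (L1 + L2) * A.
exists (T * Cin + L3 * A), e0; split => // e He v v0 Jv Jv0.
have He1 : e <= 1 by lra.
have HeA : A * e <= rho.
  have : e <= rho / (A + 1) by lra.
  move=> Hle. have : A * e <= A * (rho / (A + 1)) by apply: Rmult_le_compat_l.
  have -> : A * (rho / (A + 1)) = rho - rho / (A + 1) by field; lra.
  have : 0 < rho / (A + 1) by apply: Rdiv_lt_0_compat; lra.
  move=> ? ?; lra.
have [y [Hy [I [HI ->]]]] := Jv.
have Hb : in_box (fun i => ab i + e * u i) by apply: Hbox; lra.
have [v0' Hv0'] := JhatY_ex H Hy0.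
have -> : v0 = v0' by apply: (Jhat_uniq H Hab Jv0); exists y0; split.
case: Hv0' => [I0 [HI0 ->]].
have Hd : forall t, 0 <= t <= T -> nrm (fun k => y t k - y0 t k) <= A * e.
  move=> t Ht. apply: Rle_trans (HC1' _ _ Hb Hy t Ht) _.
  rewrite nrm_dir; last lra. rewrite /A /Nu. apply: Req_le; ring.
have Hcl : forall t, 0 <= t <= T -> close rho (y t) (y0 t) by move=> t Ht; apply: nrm_close; move: (Hd t Ht) => ?; lra.
have Hcl1 : forall t, 0 <= t <= T -> close rho1 (y t) (y0 t) by move=> t Ht k; move: (Hcl t Ht k) => ?; lra.
have Hcl2 : forall t, 0 <= t <= T -> close rho2 (y t) (y0 t) by move=> t Ht k; move: (Hcl t Ht k) => ?; lra.
have Hcl0 : forall rr, 0 < rr -> forall t, close rr (y0 t) (y0 t) by move=> rr Hrr t; apply: close_refl; lra.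
have HIl := is_RInt_lin (-1) HT HI HI0.
have Hint : Rabs (I + -1 * I0) <= Cin * e * T.
  apply: (is_RInt_bound HT HIl) => t Ht.
  rewrite rhat_affine -/Pr -/Pru.
  have E1 := HLN1 ord0 t Ht (y0 t) (y t) (Hcl0 _ Hr1 t) (Hcl1 t Ht). rewrite /= in E1.
  have E2 := HLN2 ord0 t Ht (y0 t) (y t) (Hcl0 _ Hr2 t) (Hcl2 t Ht). rewrite /= in E2.
  have E3 := HBd2 t Ht. rewrite /= in E3.
  have Hdt := Hd t Ht.
  have Hn1 : L1 * nrm (fun j => y t j - y0 t j) <= L1 * (A * e) by apply: Rmult_le_compat_l.
  have Hn2 : L2 * nrm (fun j => y t j - y0 t j) <= L2 * (A * e) by apply: Rmult_le_compat_l.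
  have Hbr : Rabs (Pru (y t) - Pr (y t)) <= Bd + (L1 + L2) * A.
    have -> : Pru (y t) - Pr (y t) = (Pru (y0 t) - Pr (y0 t)) + (Pru (y t) - Pru (y0 t)) - (Pr (y t) - Pr (y0 t)) by ring.
    apply: Rle_trans (Rabs_triang _ _) _. rewrite Rabs_Ropp.
    apply: Rle_trans (Rplus_le_compat_r _ _ _ (Rabs_triang _ _)) _.
    have : A * e <= A * 1 by apply: Rmult_le_compat_l.
    move=> ?. nra.
  have -> : Pr (y t) + e * (Pru (y t) - Pr (y t)) + -1 * Pr (y0 t) = (Pr (y t) - Pr (y0 t)) + e * (Pru (y t) - Pr (y t)) by ring.
  apply: Rle_trans (Rabs_triang _ _) _. rewrite Rabs_mult (Rabs_right e); last lra.
  have : e * Rabs (Pru (y t) - Pr (y t)) <= e * (Bd + (L1 + L2) * A) by apply: Rmult_le_compat_l; lra.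
  rewrite /Cin. move=> ?; nra.
have Hq : Rabs (q (y T) - q (y0 T)) <= L3 * (A * e).
  have HTT : 0 <= T <= T by lra.
  have := HLN3 ord0 T HTT (y0 T) (y T) (@close_refl n (y0 T) rho3 ltac:(lra)) ltac:(move=> k; move: (Hcl T HTT k) => ?; lra).
  rewrite /=. move=> E. apply: Rle_trans E _. apply: Rmult_le_compat_l => //. exact: Hd.
have -> : I + q (y T) - (I0 + q (y0 T)) = (I + -1 * I0) + (q (y T) - q (y0 T)) by ring.
apply: Rle_trans (Rabs_triang _ _) _.
have -> : (T * Cin + L3 * A) * e = Cin * e * T + L3 * (A * e) by ring.
lra.
Qed.

Lemma comb_dir2 m n (g0 : vec n -> R) (g : 'I_m -> vec n -> R) (a x z : vec m) e y :
  comb g0 g (fun i => a i + e * (x i + z i)) y =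
  comb g0 g a y + e * ((comb g0 g (fun i => a i + x i) y - comb g0 g a y) +
                       (comb g0 g (fun i => a i + z i) y - comb g0 g a y)).
Proof.
rewrite (comb_affine g0 g a (fun i => x i + z i)). f_equal. f_equal.
rewrite !comb_diff_beta -sumI_plus. apply: sumI_ext => i; ring.
Qed.

Lemma fhat_dir2 n m (f : vec n -> vec m -> vec n) y (a x z : vec m) e k :
  fhat f y (fun i => a i + e * (x i + z i)) k = fhat f y a k + e * ((fhat f y (fun i => a i + x i) k - fhat f y a k) +
     (fhat f y (fun i => a i + z i) k - fhat f y a k)).
Proof. exact: (comb_dir2 (fun y => f y (vzero m) k) (fun i y => f y (unitv i) k)). Qed.

Lemma rhat_dir2 n m (r : vec n -> vec m -> R) y (a x z : vec m) e :
  rhat r y (fun i => a i + e * (x i + z i)) = rhat r y a + e * ((rhat r y (fun i => a i + x i) - rhat r y a) +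
     (rhat r y (fun i => a i + z i) - rhat r y a)).
Proof. exact: (comb_dir2 (fun y => r y (vzero m)) (fun i y => r y (unitv i))). Qed.

Lemma sd_real a1 a2 a3 a0 u1 u2 w1 w3 e B c12 c13 : 0 <= e ->
  Rabs (a1 - a2 - a3 + a0) <= B -> Rabs ((u1 - a1) - (u2 - a2)) <= c12 -> Rabs ((w1 - a1) - (w3 - a3)) <= c13 ->
  Rabs ((a1 + e * ((u1 - a1) + (w1 - a1))) - (a2 + e * (u2 - a2)) - (a3 + e * (w3 - a3)) + a0) <= B + e * (c12 + c13).
Proof.
move=> He H1 H2 H3.
have -> : (a1 + e * ((u1 - a1) + (w1 - a1))) - (a2 + e * (u2 - a2)) - (a3 + e * (w3 - a3)) + a0 =
  (a1 - a2 - a3 + a0) + e * (((u1 - a1) - (u2 - a2)) + ((w1 - a1) - (w3 - a3))) by ring.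
apply: Rle_trans (Rabs_triang _ _) _. rewrite Rabs_mult (Rabs_right e); last lra.
have : Rabs (((u1 - a1) - (u2 - a2)) + ((w1 - a1) - (w3 - a3))) <= c12 + c13.
  apply: Rle_trans (Rabs_triang _ _) _. lra.
move=> ?. have : e * Rabs (u1 - a1 - (u2 - a2) + (w1 - a1 - (w3 - a3))) <= e * (c12 + c13) by apply: Rmult_le_compat_l.
lra.
Qed.

Lemma lin_diff_bound a1 a2 u1 u2 L0 Lu d : Rabs (a1 - a2) <= L0 * d -> Rabs (u1 - u2) <= Lu * d ->
  Rabs ((u1 - a1) - (u2 - a2)) <= (L0 + Lu) * d.
Proof.
move=> H1 H2. have -> : (u1 - a1) - (u2 - a2) = (u1 - u2) - (a1 - a2) by ring.
apply: Rle_trans (Rabs_triang _ _) _. rewrite Rabs_Ropp. lra.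
Qed.

Lemma nrm_tri3 n (y1 y2 y0 : vec n) : nrm (fun k => y1 k - y2 k) <= nrm (fun k => y1 k - y0 k) + nrm (fun k => y2 k - y0 k).
Proof.
rewrite (nrm_ext (v := fun k => (y1 k - y0 k) + - (y2 k - y0 k))); last by move=> k; ring.
apply: Rle_trans (nrm_triang _ _) _. rewrite (nrm_opp (fun k => y2 k - y0 k)). lra.
Qed.

Lemma close_weak n (x y : vec n) r r' : close r x y -> r <= r' -> close r' x y.
Proof. move=> H Hr k; move: (H k) => ?; lra. Qed.

Lemma nrm_nonneg_mul_le a b c : 0 <= a -> b <= c -> a * b <= a * c.
Proof. move=> Ha Hb; apply: Rmult_le_compat_l => //. Qed.

Lemma K2 n m T X x0 f r q (H : @core n m T X x0 f r q) (ab u w : vec m) :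
  in_box ab ->
  (forall e, 0 <= e <= 1 -> in_box (fun i => ab i + e * u i)) ->
  (forall e, 0 <= e <= 1 -> in_box (fun i => ab i + e * w i)) ->
  (forall e, 0 <= e <= 1 -> in_box (fun i => ab i + e * (u i + w i))) ->
  forall eta, 0 < eta -> exists e0, 0 < e0 /\ forall e, 0 < e <= e0 -> forall v1 v2 v3 v0,
    Jhat X T x0 f r q (fun i => ab i + e * (u i + w i)) v1 ->
    Jhat X T x0 f r q (fun i => ab i + e * u i) v2 ->
    Jhat X T x0 f r q (fun i => ab i + e * w i) v3 ->
    Jhat X T x0 f r q ab v0 ->
    Rabs (v1 - v2 - v3 + v0) <= eta * e.
Proof.
move=> Hab Hbu Hbw Hbuw eta Heta. have HT : 0 <= T by have := cT H; lra.
have [[y0 Hy0] _] := csol H Hab.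
have Hp := dw_ctraj (solves_dw Hy0).
have [C1 [HC1 HC1']] := traj_lip H Hab Hy0.
set S := C1 * (nrm u + nrm w + nrm (fun i => u i + w i)).
have HS : 0 <= S.
  apply: Rmult_le_pos => //. move: (nrm_ge0 u) (nrm_ge0 w) (nrm_ge0 (fun i => u i + w i)) => ? ? ?; lra.
have CF : forall b k, C1_Rn (fun y => fhat f y b k) := fun b k => C1_fhat b k (cf0 H) (cfi H).
have CR : forall b, C1_Rn (fun y => rhat r y b) := fun b => C1_rhat b (cr0 H) (cri H).
have [M [HM HSDf]] := fam_SD (g := fun k y => fhat f y ab k) HT Hp (CF ab).
have [Mr [HMr HSDr]] := fam_SD (N := 1) (g := fun _ y => rhat r y ab) HT Hp (fun _ => CR ab).
have [Mq [HMq HSDq]] := fam_SD (N := 1) (g := fun _ => q) (p := fun _ => y0 T) HT (@ctraj_const n T (y0 T)) (fun _ => cq H).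
have [rf0 [Lf0 [Hrf0 [HLf0 LNf0]]]] := fam_LN (g := fun k y => fhat f y ab k) HT Hp (CF ab).
have [rfu [Lfu [Hrfu [HLfu LNfu]]]] := fam_LN (g := fun k y => fhat f y (fun i => ab i + u i) k) HT Hp (CF (fun i => ab i + u i)).
have [rfw [Lfw [Hrfw [HLfw LNfw]]]] := fam_LN (g := fun k y => fhat f y (fun i => ab i + w i) k) HT Hp (CF (fun i => ab i + w i)).
have [rr0 [Lr0 [Hrr0 [HLr0 LNr0]]]] := fam_LN (N := 1) (g := fun _ y => rhat r y ab) HT Hp (fun _ => CR ab).
have [rru [Lru [Hrru [HLru LNru]]]] := fam_LN (N := 1) (g := fun _ y => rhat r y (fun i => ab i + u i)) HT Hp (fun _ => CR (fun i => ab i + u i)).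
have [rrw [Lrw [Hrrw [HLrw LNrw]]]] := fam_LN (N := 1) (g := fun _ y => rhat r y (fun i => ab i + w i)) HT Hp (fun _ => CR (fun i => ab i + w i)).
set Lf := Lf0 + Lfu + Lfw. set Lr := Lr0 + Lru + Lrw.
have HLf : 0 <= Lf by rewrite /Lf; lra.
have HLr : 0 <= Lr by rewrite /Lr; lra.
have Hn := pos_INR n.
set K := INR n * (M + 1).
have HK : 0 <= K by rewrite /K; apply: Rmult_le_pos => //; lra.
set E := INR n * S * T * exp (K * T).
have HE : 0 <= E by rewrite /E; apply: Rmult_le_pos; [apply: Rmult_le_pos; [apply: Rmult_le_pos|]|left; apply: exp_pos].
set A := 2 * (Mr + 1) * E * T + 2 * S * T + 2 * (Mq + 1) * E + 2 * S.
have HA : 0 <= A.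
  rewrite /A. have : 0 <= (Mr + 1) * E * T by apply: Rmult_le_pos => //; apply: Rmult_le_pos => //; lra.
  have : 0 <= S * T by apply: Rmult_le_pos.
  have : 0 <= (Mq + 1) * E by apply: Rmult_le_pos => //; lra.
  move=> ? ? ?; lra.
set B := 4 * Lf * (Mr + 1) * E * T + 4 * Lr * S * T + 4 * Lf * (Mq + 1) * E.
have HB : 0 <= B.
  rewrite /B. have : 0 <= Lf * (Mr + 1) * E * T by apply: Rmult_le_pos => //; apply: Rmult_le_pos => //; apply: Rmult_le_pos => //; lra.
  have : 0 <= Lr * S * T by apply: Rmult_le_pos => //; apply: Rmult_le_pos.
  have : 0 <= Lf * (Mq + 1) * E by apply: Rmult_le_pos => //; apply: Rmult_le_pos => //; lra.
  move=> ? ? ?; lra.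
have [eta1 [Heta1 [Heta11 [_ Heta12]]]] := min3 Rlt_0_1 Rlt_0_1 (ltac:(apply: Rdiv_lt_0_compat; lra) : 0 < eta / (2 * (A + 1))).
have [rf [Hrf HSDf']] := HSDf eta1 Heta1.
have [rr [Hrr HSDr']] := HSDr eta1 Heta1.
have [rq [Hrq HSDq']] := HSDq eta1 Heta1.
have [rho1 [Hrho1 [Hr1a [Hr1b Hr1c]]]] := min3 Hrf Hrr Hrq.
have [rho2 [Hrho2 [Hr2a [Hr2b Hr2c]]]] := min3 Hrf0 Hrfu Hrfw.
have [rho3 [Hrho3 [Hr3a [Hr3b Hr3c]]]] := min3 Hrr0 Hrru Hrrw.
have [rho [Hrho [Hra [Hrb Hrc]]]] := min3 Hrho1 Hrho2 Hrho3.
have [e0 [He0 [He01 [He02 He03]]]] := min3 Rlt_0_1 (ltac:(apply: Rdiv_lt_0_compat; lra) : 0 < rho / (S + 1))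
   (ltac:(apply: Rdiv_lt_0_compat; lra) : 0 < eta / (2 * (B + 1))).
exists e0; split => // e He v1 v2 v3 v0 J1 J2 J3 J0.
have He1 : 0 <= e <= 1 by lra.
have HSe : S * e <= rho.
  have : S * e <= S * (rho / (S + 1)) by apply: Rmult_le_compat_l => //; lra.
  have -> : S * (rho / (S + 1)) = rho - rho / (S + 1) by field; lra.
  have : 0 < rho / (S + 1) by apply: Rdiv_lt_0_compat; lra.
  move=> ? ?; lra.
have [y1 [Hy1 [I1 [HI1 ->]]]] := J1.
have [y2 [Hy2 [I2 [HI2 ->]]]] := J2.
have [y3 [Hy3 [I3 [HI3 ->]]]] := J3.
have [v0' Hv0'] := JhatY_ex H Hy0.
have -> : v0 = v0' by apply: (Jhat_uniq H Hab J0); exists y0; split.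
case: Hv0' => [I0 [HI0 ->]].
have Hnu := nrm_ge0 u. have Hnw := nrm_ge0 w. have Hnuw := nrm_ge0 (fun i => u i + w i).
have D1 : forall t, 0 <= t <= T -> nrm (fun k => y1 t k - y0 t k) <= S * e.
  move=> t Ht. apply: Rle_trans (HC1' _ _ (Hbuw e He1) Hy1 t Ht) _.
  rewrite nrm_dir; last lra. rewrite /S.
  have : C1 * nrm (fun i => u i + w i) <= C1 * (nrm u + nrm w + nrm (fun i => u i + w i)) by apply: Rmult_le_compat_l => //; lra.
  move=> ?; nra.
have D2 : forall t, 0 <= t <= T -> nrm (fun k => y2 t k - y0 t k) <= S * e.
  move=> t Ht. apply: Rle_trans (HC1' _ _ (Hbu e He1) Hy2 t Ht) _.
  rewrite nrm_dir; last lra. rewrite /S.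
  have : C1 * nrm u <= C1 * (nrm u + nrm w + nrm (fun i => u i + w i)) by apply: Rmult_le_compat_l => //; lra.
  move=> ?; nra.
have D3 : forall t, 0 <= t <= T -> nrm (fun k => y3 t k - y0 t k) <= S * e.
  move=> t Ht. apply: Rle_trans (HC1' _ _ (Hbw e He1) Hy3 t Ht) _.
  rewrite nrm_dir; last lra. rewrite /S.
  have : C1 * nrm w <= C1 * (nrm u + nrm w + nrm (fun i => u i + w i)) by apply: Rmult_le_compat_l => //; lra.
  move=> ?; nra.
have CL : forall (y : R -> vec n) t, 0 <= t <= T -> nrm (fun k => y t k - y0 t k) <= S * e -> forall r', rho <= r' -> close r' (y t) (y0 t).
  move=> y t Ht Hd r' Hr'. apply: nrm_close. lra.
have CL0 : forall t r', 0 < r' -> close r' (y0 t) (y0 t) by move=> t r' Hr'; apply: close_refl; lra.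
have D12 : forall t, 0 <= t <= T -> nrm (fun k => y1 t k - y2 t k) <= 2 * (S * e).
  move=> t Ht. apply: Rle_trans (nrm_tri3 (y1 t) (y2 t) (y0 t)) _. move: (D1 t Ht) (D2 t Ht) => ? ?; lra.
have D13 : forall t, 0 <= t <= T -> nrm (fun k => y1 t k - y3 t k) <= 2 * (S * e).
  move=> t Ht. apply: Rle_trans (nrm_tri3 (y1 t) (y3 t) (y0 t)) _. move: (D1 t Ht) (D3 t Ht) => ? ?; lra.
set Dv := fun s k => y1 s k + -1 * y2 s k + -1 * y3 s k + 1 * y0 s k.
have HDv : forall t, 0 <= t <= T -> nrm (Dv t) <= e * E * (2 * eta1 + 4 * Lf * e).
  move=> t Ht.
  have HG := @gronwall n T Dv
    (fun s k => fhat f (y1 s) (fun i => ab i + e * (u i + w i)) k + -1 * fhat f (y2 s) (fun i => ab i + e * u i) k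
              + -1 * fhat f (y3 s) (fun i => ab i + e * w i) k + 1 * fhat f (y0 s) ab k)
    K 0 (INR n * (2 * eta1 * (S * e) + 4 * Lf * (S * e) * e)) HT HK (Rle_refl 0).
  have Hb0 : 0 <= INR n * (2 * eta1 * (S * e) + 4 * Lf * (S * e) * e).
    apply: Rmult_le_pos => //. have : 0 <= S * e by apply: Rmult_le_pos; lra.
    move=> ?. have : 0 <= eta1 * (S * e) by apply: Rmult_le_pos; lra.
    have : 0 <= Lf * (S * e) * e by apply: Rmult_le_pos; [apply: Rmult_le_pos|]; lra.
    move=> ? ?; lra.
  have := HG Hb0.
  have -> : (0 + INR n * (2 * eta1 * (S * e) + 4 * Lf * (S * e) * e) * T) * exp (K * T) = e * E * (2 * eta1 + 4 * Lf * e)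
    by rewrite /E; ring.
  apply => //.
  - move=> s Hs k. rewrite /Dv.
    refine (dw_lin 1 _ (solves_dw Hy0 Hs k)).
    refine (dw_lin (-1) _ (solves_dw Hy3 Hs k)).
    refine (dw_lin (-1) (solves_dw Hy1 Hs k) (solves_dw Hy2 Hs k)).
  - move=> s Hs. rewrite /K.
    have -> : INR n * (M + 1) * nrm (Dv s) + INR n * (2 * eta1 * (S * e) + 4 * Lf * (S * e) * e)
       = sumI (fun _ : 'I_n => (M + 1) * nrm (Dv s) + 2 * eta1 * (S * e) + 4 * Lf * (S * e) * e)
      by rewrite sumI_const; ring.
    apply: sumI_le => k /=.
    have E1 := @fhat_dir2 n m f (y1 s) ab u w e k.
    have E2 := @fhat_affine n m f (y2 s) ab u e k.
    have E3 := @fhat_affine n m f (y3 s) ab w e k.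
    rewrite E1 E2 E3.
    set a1 := fhat f (y1 s) ab k. set a2 := fhat f (y2 s) ab k. set a3 := fhat f (y3 s) ab k.
    set a0 := fhat f (y0 s) ab k.
    set u1 := fhat f (y1 s) (fun i => ab i + u i) k. set u2 := fhat f (y2 s) (fun i => ab i + u i) k.
    set w1 := fhat f (y1 s) (fun i => ab i + w i) k. set w3 := fhat f (y3 s) (fun i => ab i + w i) k.
    have -> : a1 + e * (u1 - a1 + (w1 - a1)) + -1 * (a2 + e * (u2 - a2)) + -1 * (a3 + e * (w3 - a3)) + 1 * a0
      = (a1 + e * ((u1 - a1) + (w1 - a1))) - (a2 + e * (u2 - a2)) - (a3 + e * (w3 - a3)) + a0 by ring.
    have Hc1 := CL y1 s Hs (D1 s Hs). have Hc2 := CL y2 s Hs (D2 s Hs). have Hc3 := CL y3 s Hs (D3 s Hs).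
    have Hsd := HSDf' k s Hs (y1 s) (y2 s) (y3 s) (Hc1 rf ltac:(lra)) (Hc2 rf ltac:(lra)) (Hc3 rf ltac:(lra)).
    rewrite /= -/a1 -/a2 -/a3 -/a0 in Hsd.
    have L1 := LNf0 k s Hs (y2 s) (y1 s) (Hc2 rf0 ltac:(lra)) (Hc1 rf0 ltac:(lra)). rewrite /= -/a1 -/a2 in L1.
    have L2 := LNfu k s Hs (y2 s) (y1 s) (Hc2 rfu ltac:(lra)) (Hc1 rfu ltac:(lra)). rewrite /= -/u1 -/u2 in L2.
    have L3 := LNf0 k s Hs (y3 s) (y1 s) (Hc3 rf0 ltac:(lra)) (Hc1 rf0 ltac:(lra)). rewrite /= -/a1 -/a3 in L3.
    have L4 := LNfw k s Hs (y3 s) (y1 s) (Hc3 rfw ltac:(lra)) (Hc1 rfw ltac:(lra)). rewrite /= -/w1 -/w3 in L4.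
    have H12 := lin_diff_bound L1 L2. have H13 := lin_diff_bound L3 L4.
    apply: Rle_trans (sd_real (c12 := (Lf0 + Lfu) * nrm (fun j => y1 s j - y2 s j))
                              (c13 := (Lf0 + Lfw) * nrm (fun j => y1 s j - y3 s j)) _ Hsd H12 H13) _; first lra.
    have En : nrm (fun j => y1 s j - y2 s j - y3 s j + y0 s j) = nrm (Dv s) by apply: nrm_ext => j; rewrite /Dv; ring.
    rewrite En.
    have Hnd := nrm_ge0 (Dv s).
    have T1 : (M + eta1) * nrm (Dv s) <= (M + 1) * nrm (Dv s) by apply: Rmult_le_compat_r; lra.
    have T2 : 2 * eta1 * nrm (fun j => y2 s j - y0 s j) <= 2 * eta1 * (S * e) by apply: Rmult_le_compat_l; [lra | exact: D2].
    have T3 : (Lf0 + Lfu) * nrm (fun j => y1 s j - y2 s j) <= (Lf0 + Lfu) * (2 * (S * e)) by apply: Rmult_le_compat_l; [lra | exact: D12].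
    have T4 : (Lf0 + Lfw) * nrm (fun j => y1 s j - y3 s j) <= (Lf0 + Lfw) * (2 * (S * e)) by apply: Rmult_le_compat_l; [lra | exact: D13].
    have T5 : e * ((Lf0 + Lfu) * nrm (fun j => y1 s j - y2 s j) + (Lf0 + Lfw) * nrm (fun j => y1 s j - y3 s j))
           <= e * (4 * Lf * (S * e)).
      apply: Rmult_le_compat_l; first lra.
      have : 0 <= S * e by apply: Rmult_le_pos; lra.
      rewrite /Lf. move=> ?; nra.
    lra.
  - rewrite /Dv. rewrite (proj1 Hy1) (proj1 Hy2) (proj1 Hy3) (proj1 Hy0).
    rewrite (nrm_ext (v := fun _ => 0)); last by move=> k; ring.
    rewrite /nrm (sumI_ext (G := fun _ => 0)) ?sumI_0; [lra | move=> k; exact: Rabs_R0].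
set R1 := (Mr + 1) * (E * (2 * eta1 + 4 * Lf * e)) + 2 * eta1 * S + 4 * Lr * S * e.
set Q1 := (Mq + 1) * (E * (2 * eta1 + 4 * Lf * e)) + 2 * eta1 * S.
have HDe : forall t, 0 <= t <= T -> nrm (fun j => y1 t j - y2 t j - y3 t j + y0 t j) <= e * (E * (2 * eta1 + 4 * Lf * e)).
  move=> t Ht. rewrite (nrm_ext (v := Dv t)); last by move=> j; rewrite /Dv; ring.
  move: (HDv t Ht) => ?; lra.
have HEe : 0 <= E * (2 * eta1 + 4 * Lf * e) by apply: Rmult_le_pos => //; nra.
have HIa := is_RInt_lin (-1) HT HI1 HI2.
have HIb := is_RInt_lin (-1) HT HIa HI3.
have HIc := is_RInt_lin 1 HT HIb HI0.
have Hint : Rabs (I1 + -1 * I2 + -1 * I3 + 1 * I0) <= e * R1 * T.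
  apply: (is_RInt_bound HT HIc) => s Hs /=.
  have E1 := @rhat_dir2 n m r (y1 s) ab u w e.
  have E2 := @rhat_affine n m r (y2 s) ab u e.
  have E3 := @rhat_affine n m r (y3 s) ab w e.
  rewrite E1 E2 E3.
  set a1 := rhat r (y1 s) ab. set a2 := rhat r (y2 s) ab. set a3 := rhat r (y3 s) ab.
  set a0 := rhat r (y0 s) ab.
  set u1 := rhat r (y1 s) (fun i => ab i + u i). set u2 := rhat r (y2 s) (fun i => ab i + u i).
  set w1 := rhat r (y1 s) (fun i => ab i + w i). set w3 := rhat r (y3 s) (fun i => ab i + w i).
  have -> : a1 + e * (u1 - a1 + (w1 - a1)) + -1 * (a2 + e * (u2 - a2)) + -1 * (a3 + e * (w3 - a3)) + 1 * a0
    = (a1 + e * ((u1 - a1) + (w1 - a1))) - (a2 + e * (u2 - a2)) - (a3 + e * (w3 - a3)) + a0 by ring.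
  have Hc1 := CL y1 s Hs (D1 s Hs). have Hc2 := CL y2 s Hs (D2 s Hs). have Hc3 := CL y3 s Hs (D3 s Hs).
  have Hsd := HSDr' ord0 s Hs (y1 s) (y2 s) (y3 s) (Hc1 rr ltac:(lra)) (Hc2 rr ltac:(lra)) (Hc3 rr ltac:(lra)).
  rewrite /= -/a1 -/a2 -/a3 -/a0 in Hsd.
  have L1 := LNr0 ord0 s Hs (y2 s) (y1 s) (Hc2 rr0 ltac:(lra)) (Hc1 rr0 ltac:(lra)). rewrite /= -/a1 -/a2 in L1.
  have L2 := LNru ord0 s Hs (y2 s) (y1 s) (Hc2 rru ltac:(lra)) (Hc1 rru ltac:(lra)). rewrite /= -/u1 -/u2 in L2.
  have L3 := LNr0 ord0 s Hs (y3 s) (y1 s) (Hc3 rr0 ltac:(lra)) (Hc1 rr0 ltac:(lra)). rewrite /= -/a1 -/a3 in L3.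
  have L4 := LNrw ord0 s Hs (y3 s) (y1 s) (Hc3 rrw ltac:(lra)) (Hc1 rrw ltac:(lra)). rewrite /= -/w1 -/w3 in L4.
  have H12 := lin_diff_bound L1 L2. have H13 := lin_diff_bound L3 L4.
  apply: Rle_trans (sd_real (c12 := (Lr0 + Lru) * nrm (fun j => y1 s j - y2 s j))
                            (c13 := (Lr0 + Lrw) * nrm (fun j => y1 s j - y3 s j)) _ Hsd H12 H13) _; first lra.
  have Hnd := nrm_ge0 (fun j => y1 s j - y2 s j - y3 s j + y0 s j).
  have T1 : (Mr + eta1) * nrm (fun j => y1 s j - y2 s j - y3 s j + y0 s j) <= (Mr + 1) * (e * (E * (2 * eta1 + 4 * Lf * e))).
    apply: Rmult_le_compat; lra || (try exact: HDe).
  have T2 : 2 * eta1 * nrm (fun j => y2 s j - y0 s j) <= 2 * eta1 * (S * e) by apply: Rmult_le_compat_l; [lra | exact: D2].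
  have T3 : (Lr0 + Lru) * nrm (fun j => y1 s j - y2 s j) <= (Lr0 + Lru) * (2 * (S * e)) by apply: Rmult_le_compat_l; [lra | exact: D12].
  have T4 : (Lr0 + Lrw) * nrm (fun j => y1 s j - y3 s j) <= (Lr0 + Lrw) * (2 * (S * e)) by apply: Rmult_le_compat_l; [lra | exact: D13].
  have T5 : e * ((Lr0 + Lru) * nrm (fun j => y1 s j - y2 s j) + (Lr0 + Lrw) * nrm (fun j => y1 s j - y3 s j))
         <= e * (4 * Lr * (S * e)).
    apply: Rmult_le_compat_l; first lra.
    have : 0 <= S * e by apply: Rmult_le_pos; lra.
    rewrite /Lr. move=> ?; nra.
  have -> : e * R1 = (Mr + 1) * (e * (E * (2 * eta1 + 4 * Lf * e))) + 2 * eta1 * (S * e) + e * (4 * Lr * (S * e))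
    by rewrite /R1; ring.
  lra.
have Hqd : Rabs (q (y1 T) - q (y2 T) - q (y3 T) + q (y0 T)) <= e * Q1.
  have HTT : 0 <= T <= T by lra.
  have Hc1 := CL y1 T HTT (D1 T HTT). have Hc2 := CL y2 T HTT (D2 T HTT). have Hc3 := CL y3 T HTT (D3 T HTT).
  have Hsd := HSDq' ord0 T HTT (y1 T) (y2 T) (y3 T) (Hc1 rq ltac:(lra)) (Hc2 rq ltac:(lra)) (Hc3 rq ltac:(lra)).
  rewrite /= in Hsd. apply: Rle_trans Hsd _.
  have Hnd := nrm_ge0 (fun j => y1 T j - y2 T j - y3 T j + y0 T j).
  have T1 : (Mq + eta1) * nrm (fun j => y1 T j - y2 T j - y3 T j + y0 T j) <= (Mq + 1) * (e * (E * (2 * eta1 + 4 * Lf * e))).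
    apply: Rmult_le_compat; lra || (try exact: HDe).
  have T2 : 2 * eta1 * nrm (fun j => y2 T j - y0 T j) <= 2 * eta1 * (S * e) by apply: Rmult_le_compat_l; [lra | exact: D2].
  have -> : e * Q1 = (Mq + 1) * (e * (E * (2 * eta1 + 4 * Lf * e))) + 2 * eta1 * (S * e) by rewrite /Q1; ring.
  lra.
have HRQ : R1 * T + Q1 <= eta.
  have -> : R1 * T + Q1 = eta1 * A + e * B by rewrite /R1 /Q1 /A /B; ring.
  have : eta1 * A <= eta / 2.
    have : eta1 * A <= eta / (2 * (A + 1)) * A by apply: Rmult_le_compat_r.
    have -> : eta / (2 * (A + 1)) * A = eta / 2 - eta / (2 * (A + 1)) by field; lra.
    have : 0 < eta / (2 * (A + 1)) by apply: Rdiv_lt_0_compat; lra.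
    move=> ? ?; lra.
  have : e * B <= eta / 2.
    have : e * B <= eta / (2 * (B + 1)) * B by apply: Rmult_le_compat_r; lra.
    have -> : eta / (2 * (B + 1)) * B = eta / 2 - eta / (2 * (B + 1)) by field; lra.
    have : 0 < eta / (2 * (B + 1)) by apply: Rdiv_lt_0_compat; lra.
    move=> ? ?; lra.
  move=> ? ?; lra.
have -> : I1 + q (y1 T) - (I2 + q (y2 T)) - (I3 + q (y3 T)) + (I0 + q (y0 T)) =
  (I1 + -1 * I2 + -1 * I3 + 1 * I0) + (q (y1 T) - q (y2 T) - q (y3 T) + q (y0 T)) by ring.
apply: Rle_trans (Rabs_triang _ _) _.
have : e * (R1 * T + Q1) <= e * eta by apply: Rmult_le_compat_l; lra.
move=> ?; lra.
Qed.

Definition adm m (ab u : vec m) := forall e, 0 <= e <= 1 -> in_box (fun i => ab i + e * u i).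

Definition HasD n m X T x0 f r q (ab u : vec m) (v0 L : R) :=
  forall eta, 0 < eta -> exists d, 0 < d /\ forall e, 0 < e <= 1 -> e < d -> forall v,
    @Jhat n m X T x0 f r q (fun i => ab i + e * u i) v -> Rabs ((v - v0) / e - L) < eta.

Lemma dir_mono n m T X x0 f r q (ab u : vec m) v0 e1 e2 w1 w2 :
  Jhat_concave X T x0 f r q -> in_box ab -> adm ab u -> @Jhat n m X T x0 f r q ab v0 ->
  0 < e1 <= e2 -> e2 <= 1 ->
  Jhat X T x0 f r q (fun i => ab i + e1 * u i) w1 -> Jhat X T x0 f r q (fun i => ab i + e2 * u i) w2 ->
  (w2 - v0) / e2 <= (w1 - v0) / e1.
Proof.
move=> Hc Hab Hu J0 He1 He2 J1 J2.
set lam := e1 / e2.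
have Hlam : 0 <= lam <= 1.
  rewrite /lam; split; first by left; apply: Rdiv_lt_0_compat; lra.
  have -> : 1 = e2 / e2 by field; lra. apply: Rmult_le_compat_r; [left; apply: Rinv_0_lt_compat|]; lra.
have Ev : vadd (vscale lam (fun i => ab i + e2 * u i)) (vscale (1 - lam) ab) = (fun i => ab i + e1 * u i).
  apply: functional_extensionality => i. rewrite /vadd /vscale /lam. field. lra.
have := Hc _ _ lam (Hu e2 ltac:(lra)) Hab Hlam _ _ _ J2 J0 (eq_ind_r (fun z => Jhat X T x0 f r q z w1) J1 Ev).
move=> Hle.
have : e1 / e2 * (w2 - v0) <= w1 - v0 by rewrite /lam in Hle; lra.
move=> H2.
have E1 : (w2 - v0) / e2 = / e1 * (e1 / e2 * (w2 - v0)) by field; lra.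
rewrite E1 /Rdiv (Rmult_comm (w1 - v0)). apply: Rmult_le_compat_l => //.
left; apply: Rinv_0_lt_compat; lra.
Qed.

Lemma HasD_ex n m T X x0 f r q (H : @core n m T X x0 f r q) (ab u : vec m) v0 :
  Jhat_concave X T x0 f r q -> in_box ab -> adm ab u -> Jhat X T x0 f r q ab v0 ->
  exists L, HasD X T x0 f r q ab u v0 L.
Proof.
move=> Hc Hab Hu J0.
pose E := fun z => exists e v, 0 < e <= 1 /\ Jhat X T x0 f r q (fun i => ab i + e * u i) v /\ z = (v - v0) / e.
have [C [e0 [He0 HC]]] := K1 H Hab Hu.
have [e1 [He1 [He1a [_ He1b]]]] := min3 Rlt_0_1 Rlt_0_1 He0.
have [w1 Jw1] := Jhat_ex H (Hu e1 ltac:(lra)).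
have Hbnd : forall z, E z -> z <= C.
  move=> z [e [v [He [Jv ->]]]].
  case: (Rle_lt_dec e e1) => Hee.
  - have := HC e ltac:(lra) v v0 Jv J0. move=> /Rabs_le_between [_ ?].
    apply: (Rmult_le_reg_r e); first lra. rewrite /Rdiv Rmult_assoc Rinv_l; lra.
  - apply: Rle_trans (dir_mono Hc Hab Hu J0 (conj He1 (Rlt_le _ _ Hee)) (proj2 He) Jw1 Jv) _.
    have := HC e1 ltac:(lra) w1 v0 Jw1 J0. move=> /Rabs_le_between [_ ?].
    apply: (Rmult_le_reg_r e1); first lra. rewrite /Rdiv Rmult_assoc Rinv_l; lra.
have [v1 Jv1] := Jhat_ex H (Hu 1 ltac:(lra)).
have HE1 : E ((v1 - v0) / 1) by exists 1, v1; split; [lra | split].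
have [L HL] := completeness E (ex_intro _ C Hbnd) (ex_intro _ _ HE1).
exists L => eta Heta.
have [z [[e' [v' [He' [Jv' ->]]]] Hz]] := exists_above HL (r := L - eta) ltac:(lra).
exists e'; split; first lra.
move=> e He Hee' v Jv.
have H1 : (v' - v0) / e' <= (v - v0) / e := dir_mono Hc Hab Hu J0 (conj (proj1 He) (Rlt_le _ _ Hee')) (proj2 He') Jv Jv'.
have H2 : (v - v0) / e <= L by apply: (proj1 HL); exists e, v; split.
apply: Rabs_def1; lra.
Qed.

Lemma HasD_ub n m T X x0 f r q (H : @core n m T X x0 f r q) (ab u : vec m) v0 L :
  Jhat_concave X T x0 f r q -> in_box ab -> adm ab u -> Jhat X T x0 f r q ab v0 ->
  HasD X T x0 f r q ab u v0 L ->
  forall e v, 0 < e <= 1 -> Jhat X T x0 f r q (fun i => ab i + e * u i) v -> (v - v0) / e <= L.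
Proof.
move=> Hc Hab Hu J0 HL e v He Jv.
apply: Rnot_lt_le => Hlt.
set g := (v - v0) / e - L.
have [d [Hd Hd2]] := HL g ltac:(rewrite /g; lra).
have [e' [He' [He'1 [He'2 He'3]]]] := min3 (ltac:(lra) : 0 < e) (ltac:(lra) : 0 < d / 2) Rlt_0_1.
have [v' Jv'] := Jhat_ex H (Hu e' ltac:(lra)).
have A := Hd2 e' ltac:(lra) ltac:(lra) v' Jv'.
have B := dir_mono Hc Hab Hu J0 (conj He' He'1) (proj2 He) Jv' Jv.
move: A => /Rabs_def2 [A1 A2]. rewrite /g in A1 A2. lra.
Qed.

Lemma HasD_uniq n m T X x0 f r q (H : @core n m T X x0 f r q) (ab u : vec m) v0 L1 L2 :
  adm ab u -> HasD X T x0 f r q ab u v0 L1 -> HasD X T x0 f r q ab u v0 L2 -> L1 = L2.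
Proof.
move=> Hu H1 H2. apply: NNPP => Hne.
set g := Rabs (L1 - L2) / 2.
have Hg : 0 < g by rewrite /g; have := Rabs_pos_lt (L1 - L2) ltac:(lra); lra.
have [d1 [Hd1 H1']] := H1 g Hg. have [d2 [Hd2 H2']] := H2 g Hg.
have [e [He [He1 [He2 He3]]]] := min3 (ltac:(lra) : 0 < d1 / 2) (ltac:(lra) : 0 < d2 / 2) Rlt_0_1.
have [v Jv] := Jhat_ex H (Hu e ltac:(lra)).
have := H1' e ltac:(lra) ltac:(lra) v Jv. have := H2' e ltac:(lra) ltac:(lra) v Jv.
move=> A B.
have := Rabs_triang ((v - v0) / e - L2) (- ((v - v0) / e - L1)). rewrite Rabs_Ropp.
have -> : (v - v0) / e - L2 + - ((v - v0) / e - L1) = L1 - L2 by ring.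
rewrite /g in Hg A B. lra.
Qed.

Lemma HasD_add n m T X x0 f r q (H : @core n m T X x0 f r q) (ab u w : vec m) v0 Lu Lw Luw :
  in_box ab -> adm ab u -> adm ab w -> adm ab (fun i => u i + w i) -> Jhat X T x0 f r q ab v0 ->
  HasD X T x0 f r q ab u v0 Lu -> HasD X T x0 f r q ab w v0 Lw ->
  HasD X T x0 f r q ab (fun i => u i + w i) v0 Luw -> Luw = Lu + Lw.
Proof.
move=> Hab Hu Hw Huw J0 HLu HLw HLuw. apply: NNPP => Hne.
set g := Rabs (Luw - (Lu + Lw)) / 8.
have Hg : 0 < g by rewrite /g; have := Rabs_pos_lt (Luw - (Lu + Lw)) ltac:(lra); lra.
have [d1 [Hd1 H1]] := HLu g Hg. have [d2 [Hd2 H2]] := HLw g Hg. have [d3 [Hd3 H3]] := HLuw g Hg.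
have [e0 [He0 HK2]] := K2 H Hab Hu Hw Huw Hg.
have [da [Hda [Hda1 [Hda2 Hda3]]]] := min3 Hd1 Hd2 Hd3.
have [e [He [He1 [He2 He3]]]] := min3 (ltac:(lra) : 0 < da / 2) He0 Rlt_0_1.
have [v1 J1] := Jhat_ex H (Huw e ltac:(lra)).
have [v2 J2] := Jhat_ex H (Hu e ltac:(lra)).
have [v3 J3] := Jhat_ex H (Hw e ltac:(lra)).
have A1 := H3 e ltac:(lra) ltac:(lra) v1 J1.
have A2 := H1 e ltac:(lra) ltac:(lra) v2 J2.
have A3 := H2 e ltac:(lra) ltac:(lra) v3 J3.
have A4 := HK2 e ltac:(lra) v1 v2 v3 v0 J1 J2 J3 J0.
have A5 : Rabs ((v1 - v2 - v3 + v0) / e) <= g.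
  rewrite /Rdiv Rabs_mult Rabs_inv (Rabs_right e); last lra.
  apply: (Rmult_le_reg_r e); first lra. rewrite Rmult_assoc Rinv_l; lra.
have E : Luw - (Lu + Lw) = - ((v1 - v0) / e - Luw) + ((v2 - v0) / e - Lu) + ((v3 - v0) / e - Lw) + (v1 - v2 - v3 + v0) / e
  by field; lra.
have : Rabs (Luw - (Lu + Lw)) <= 4 * g.
  rewrite E. apply: Rle_trans (Rabs_triang _ _) _. apply: Rle_trans (Rplus_le_compat_r _ _ _ (Rabs_triang _ _)) _.
  apply: Rle_trans (Rplus_le_compat_r _ _ _ (Rplus_le_compat_r _ _ _ (Rabs_triang _ _))) _.
  rewrite Rabs_Ropp. lra.
rewrite /g. have := Rabs_pos_lt (Luw - (Lu + Lw)) ltac:(lra). lra.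
Qed.

Lemma comb_mix m n (g0 : vec n -> R) (g : 'I_m -> vec n -> R) (a b : vec m) e y :
  comb g0 g (fun k => (1 - e) * a k + e * b k) y = (1 - e) * comb g0 g a y + e * comb g0 g b y.
Proof.
rewrite /comb.
have -> : sumI (fun i => ((1 - e) * a i + e * b i) * (g i y - g0 y)) =
   sumI (fun i => (1 - e) * (a i * (g i y - g0 y)) + e * (b i * (g i y - g0 y))).
  apply: sumI_ext => i; ring.
rewrite sumI_plus !sumI_scal. ring.
Qed.

Lemma rhat_mix n m (r : vec n -> vec m -> R) (a b : vec m) e y :
  rhat r y (fun k => (1 - e) * a k + e * b k) = (1 - e) * rhat r y a + e * rhat r y b.
Proof. exact: (comb_mix (fun y => r y (vzero m)) (fun i y => r y (unitv i)) a b e y). Qed.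
Lemma fhat_mix n m (f : vec n -> vec m -> vec n) (a b : vec m) e y k :
  fhat f y (fun k => (1 - e) * a k + e * b k) k = (1 - e) * fhat f y a k + e * fhat f y b k.
Proof. exact: (comb_mix (fun y => f y (vzero m) k) (fun i y => f y (unitv i) k) a b e y). Qed.

Lemma scal0_vzero m (i : 'I_m) : scal_unit i 0 = vzero m.
Proof. apply: functional_extensionality => k. rewrite /scal_unit /vzero. by case: (k == i). Qed.

Lemma bin_f n m (X : vec n -> Prop) (f : vec n -> vec m -> vec n)
  (HAddf : forall x a, X x -> is_binary a -> forall k,
      f x a k = f x (vzero m) k + sumI (fun i => f x (scal_unit i (a i)) k - f x (vzero m) k))
  x a : X x -> is_binary a -> forall k, f x a k = fhat f x a k.
Proof.
move=> Hx Ha k. rewrite HAddf // /fhat. f_equal. apply: sumI_ext => i.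
case: (Ha i) => ->; first by rewrite scal0_vzero; ring.
rewrite /unitv /scal_unit. ring.
Qed.

Lemma bin_r n m (X : vec n -> Prop) (r : vec n -> vec m -> R)
  (HAddr : forall x a, X x -> is_binary a ->
      r x a = r x (vzero m) + sumI (fun i => r x (scal_unit i (a i)) - r x (vzero m)))
  x a : X x -> is_binary a -> r x a = rhat r x a.
Proof.
move=> Hx Ha. rewrite HAddr // /rhat. f_equal. apply: sumI_ext => i.
case: (Ha i) => ->; first by rewrite scal0_vzero; ring.
rewrite /unitv /scal_unit. ring.
Qed.

Lemma solves_ext n (X : vec n -> Prop) T x0 (F G : vec n -> vec n) z :
  (forall y, X y -> forall k, F y k = G y k) -> solves X T x0 F z -> solves X T x0 G z.
Proof.
move=> HFG [H0 H]. split => // t Ht. have [HX Hd] := H t Ht. split => // k.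
rewrite -HFG //.
Qed.

Lemma Jval_Jhat n m T X x0 f r q
  (HAddf : forall x a, X x -> is_binary a -> forall k,
      f x a k = f x (vzero m) k + sumI (fun i => f x (scal_unit i (a i)) k - f x (vzero m) k))
  (HAddr : forall x a, X x -> is_binary a ->
      r x a = r x (vzero m) + sumI (fun i => r x (scal_unit i (a i)) - r x (vzero m)))
  (HT : 0 <= T) a v :
  is_binary a -> @Jval n m X T x0 f r q a v -> Jhat X T x0 f r q a v.
Proof.
move=> Ha [z [Hz [I [HI ->]]]]. exists z; split.
  apply: (solves_ext _ Hz) => y Hy k. exact: (bin_f HAddf Hy Ha).
exists I; split => //. apply: (is_RInt_ext HT HI) => t Ht.
exact: (bin_r HAddr (solves_X Hz Ht) Ha).
Qed.

Lemma Jeps_Jhat n m T X x0 f r q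
  (HAddf : forall x a, X x -> is_binary a -> forall k,
      f x a k = f x (vzero m) k + sumI (fun i => f x (scal_unit i (a i)) k - f x (vzero m) k))
  (HAddr : forall x a, X x -> is_binary a ->
      r x a = r x (vzero m) + sumI (fun i => r x (scal_unit i (a i)) - r x (vzero m)))
  (HT : 0 <= T) ab a eps v :
  is_binary ab -> is_binary a -> @Jeps n m X T x0 f r q ab a eps v ->
  Jhat X T x0 f r q (fun k => (1 - eps) * ab k + eps * a k) v.
Proof.
move=> Hab Ha [z [Hz [c1 [c2 [[I1 [HI1 ->]] [[I2 [HI2 ->]] ->]]]]]].
exists z; split.
  apply: (solves_ext _ Hz) => y Hy k. rewrite /fmix (bin_f HAddf Hy Hab) (bin_f HAddf Hy Ha).
  by rewrite fhat_mix.
have H1 := is_RInt_lin (-1) HT HI2 HI1.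
have H2 := is_RInt_lin eps HT HI1 H1.
exists (I1 + eps * (I2 + -1 * I1)); split; last ring.
apply: (is_RInt_ext HT H2) => t Ht /=.
have Hx := solves_X Hz Ht.
rewrite (bin_r HAddr Hx Hab) (bin_r HAddr Hx Ha).
rewrite rhat_mix. ring.
Qed.

Lemma adm_of m (ab u : vec m) : in_box ab -> in_box (fun i => ab i + u i) -> adm ab u.
Proof.
move=> H1 H2 e He i. have [A1 A2] := H1 i. have [B1 B2] := H2 i.
have -> : ab i + e * u i = (1 - e) * ab i + e * (ab i + u i) by ring.
split; nra.
Qed.

Unset Implicit Arguments.
Set Strict Implicit.

Lemma HasD_zero n m T X x0 f r q (H : @core n m T X x0 f r q) (ab : vec m) v0 :
  in_box ab -> Jhat X T x0 f r q ab v0 -> HasD X T x0 f r q ab (fun _ => 0) v0 0.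
Proof.
move=> Hab J0 eta Heta. exists 1; split; first lra.
move=> e He He1 v Jv.
have Ev : (fun i => ab i + e * 0) = ab by apply: functional_extensionality => i; ring.
rewrite Ev in Jv. rewrite (Jhat_uniq H Hab Jv J0).
have -> : (v0 - v0) / e - 0 = 0 by field; lra.
rewrite Rabs_R0; lra.
Qed.

Theorem theorem3 (n m : nat) (T : R) (X : vec n -> Prop) (x0 : vec n)
  (f : vec n -> vec m -> vec n) (r : vec n -> vec m -> R) (q : vec n -> R)
  (HT : 0 < T) (Hx0 : X x0)
  (* standing assumption: the relevant state equations have unique solutions on [0,T] *)
  (Hsol_x : forall b, is_binary b -> ex_uniq_sol X T x0 (fun y : vec n => f y b))
  (Hsol_eps : forall ab a eps, is_binary ab -> is_binary a -> 0 <= eps <= 1 ->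
      ex_uniq_sol X T x0 (fmix f ab a eps))
  (Hsol_y : forall a, in_box a -> ex_uniq_sol X T x0 (fun y : vec n => fhat f y a))
  (* (A1) *)
  (HA1 : forall a, is_binary a -> C2v_Rn (fun x : vec n => f x a) /\ lipschitz_on X (fun x : vec n => f x a))
  (* (A3) *)
  (HA3r : forall a, is_binary a -> C1_Rn (fun x : vec n => r x a))
  (HA3q : C1_Rn q)
  (* (Add) *)
  (HAddf : forall x a, X x -> is_binary a -> forall k,
      f x a k = f x (vzero m) k + sumI (fun i => f x (scal_unit i (a i)) k - f x (vzero m) k))
  (HAddr : forall x a, X x -> is_binary a ->
      r x a = r x (vzero m) + sumI (fun i => r x (scal_unit i (a i)) - r x (vzero m)))
  (* concavity of hat J on [0,1]^m *)
  (Hconc : Jhat_concave X T x0 f r q) :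
  forall ab, is_binary ab ->
    exists d : vec m,
      (forall i, DNS_comp X T x0 f r q ab i (d i)) /\
      forall a, is_binary a -> forall va vab,
        Jval X T x0 f r q a va -> Jval X T x0 f r q ab vab ->
        va - vab <= dotv d (vsub a ab).

Proof.
move=> ab Hab.
have HT0 : 0 <= T by lra.
have Hbz : is_binary (vzero m) by move=> i; left.
have Hbu : forall i : 'I_m, is_binary (unitv i) by move=> i k; rewrite /unitv; case: (k == i); [right|left].
have H : core T X x0 f r q.
  constructor.
  - exact HT.
  - move=> k. apply: C2_C1. exact: (proj1 (HA1 _ Hbz) k).
  - move=> i k. apply: C2_C1. exact: (proj1 (HA1 _ (Hbu i)) k).
  - exact: (proj2 (HA1 _ Hbz)).
  - move=> i; exact: (proj2 (HA1 _ (Hbu i))).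
  - exact: HA3r.
  - move=> i; exact: HA3r.
  - exact: HA3q.
  - exact: Hsol_y.
have Habox : in_box ab by move=> i; case: (Hab i) => ->; lra.
have [v0 J0] := Jhat_ex H Habox.
pose s := fun i => 1 - 2 * ab i.
pose ep := fun i k => if k == i then s i else 0.
have Hadm_ep : forall i, adm ab (ep i).
  move=> i. apply: adm_of => // k. rewrite /ep. case: eqP => [->|_]; last by rewrite Rplus_0_r; apply: Habox.
  rewrite /s; case: (Hab i) => ->; lra.
have HLd : forall i, exists L, HasD X T x0 f r q ab (ep i) v0 L := fun i => HasD_ex H Hconc Habox (Hadm_ep i) J0.
pose Ld := fun i => proj1_sig (constructive_indefinite_description _ (HLd i)).
have HLd' : forall i, HasD X T x0 f r q ab (ep i) v0 (Ld i).
  move=> i; rewrite /Ld; case: (constructive_indefinite_description _ _) => //=.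
exists (fun i => s i * Ld i); split.
- move=> i. split => Habi eta Heta.
  + have [d [Hd Hd2]] := HLd' i eta Heta. exists d; split => // eps Heps0 Heps1 Hepsd ve v0' Je Jv.
    have Hb' : is_binary (vadd ab (unitv i)).
      move=> k; rewrite /vadd /unitv; case: eqP => [->|_]; [rewrite Habi; right; ring | rewrite Rplus_0_r; exact: Hab].
    have Jh := Jeps_Jhat HAddf HAddr HT0 Hab Hb' Je.
    have Ev : (fun k => (1 - eps) * ab k + eps * vadd ab (unitv i) k) = (fun k => ab k + eps * ep i k).
      apply: functional_extensionality => k. rewrite /vadd /unitv /ep /s. case: eqP => [->|_]; [rewrite Habi; ring | ring].
    rewrite Ev in Jh.
    have -> : v0' = v0 by apply: (Jhat_uniq H Habox (Jval_Jhat HAddf HAddr HT0 Hab Jv) J0).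
    have := Hd2 eps (conj Heps0 Heps1) Hepsd ve Jh.
    have -> : s i * Ld i = Ld i by rewrite /s Habi; ring.
    done.
  + have [d [Hd Hd2]] := HLd' i eta Heta. exists d; split => // eps Heps0 Heps1 Hepsd ve v0' Je Jv.
    have Hb' : is_binary (vsub ab (unitv i)).
      move=> k; rewrite /vsub /unitv; case: eqP => [->|_]; [rewrite Habi; left; ring | rewrite Rminus_0_r; exact: Hab].
    have Jh := Jeps_Jhat HAddf HAddr HT0 Hab Hb' Je.
    have Ev : (fun k => (1 - eps) * ab k + eps * vsub ab (unitv i) k) = (fun k => ab k + eps * ep i k).
      apply: functional_extensionality => k. rewrite /vsub /unitv /ep /s. case: eqP => [->|_]; [rewrite Habi; ring | ring].
    rewrite Ev in Jh.
    have -> : v0' = v0 by apply: (Jhat_uniq H Habox (Jval_Jhat HAddf HAddr HT0 Hab Jv) J0).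
    have := Hd2 eps (conj Heps0 Heps1) Hepsd ve Jh.
    have -> : s i * Ld i = - Ld i by rewrite /s Habi; ring.
    have -> : (v0 - ve) / eps - - Ld i = - ((ve - v0) / eps - Ld i) by field; lra.
    by rewrite Rabs_Ropp.
- move=> a Ha va vab Ja Jab.
  have Jah := Jval_Jhat HAddf HAddr HT0 Ha Ja.
  have -> : vab = v0 by apply: (Jhat_uniq H Habox (Jval_Jhat HAddf HAddr HT0 Hab Jab) J0).
  pose wk := fun (k : nat) (i : 'I_m) => if (i < k)%N then a i - ab i else 0.
  pose Sk := fun (k : nat) => sumI (fun i : 'I_m => if (i < k)%N then s i * Ld i * (a i - ab i) else 0).
  have Hadm_w : forall k, adm ab (wk k).
    move=> k. apply: adm_of => // i. rewrite /wk. case: (i < k)%N.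
    + have -> : ab i + (a i - ab i) = a i by ring. by case: (Ha i) => ->; lra.
    + rewrite Rplus_0_r; exact: Habox.
  have IND : forall k, (k <= m)%N -> HasD X T x0 f r q ab (wk k) v0 (Sk k).
    elim => [|k IH] Hk.
    + have -> : wk 0%N = (fun _ => 0) by apply: functional_extensionality.
      have -> : Sk 0%N = 0 by rewrite /Sk sumI_0.
      exact: (@HasD_zero n m T X x0 f r q H ab v0 Habox J0).
    + have Hkm : (k < m)%N by [].
      set i0 := Ordinal Hkm.
      have IH' := IH (ltnW Hkm).
      have Hcase : forall i : 'I_m, ((i < k.+1)%N = (i < k)%N || (i == i0)) /\ ((i < k)%N -> i != i0).
        move=> i. case: (ltngtP i k) => Hik.
        * split; last by move=> _; apply/eqP => E; rewrite E /= ltnn in Hik.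
          have -> : (i < k.+1)%N by apply: ltnW; rewrite ltnS.
          by rewrite /=.
        * split; last by [].
          have -> : (i < k.+1)%N = false by apply/negbTE; rewrite -leqNgt.
          have -> : (i == i0) = false by apply/negbTE/eqP => E; rewrite E /= ltnn in Hik.
          by [].
        * split; last by [].
          have -> : i = i0 by apply: val_inj.
          by rewrite eqxx /= ltnSn.
      case: (Req_dec (a i0) (ab i0)) => Heq.
      * have Ew : wk k.+1 = wk k.
          apply: functional_extensionality => i. rewrite /wk. have [E1 E2] := Hcase i. rewrite E1.
          case: (boolP (i < k)%N) => //= _. case: eqP => [->|//]. by rewrite Heq Rminus_diag.
        have ES : Sk k.+1 = Sk k.
          rewrite /Sk; apply: sumI_ext => i. have [E1 E2] := Hcase i. rewrite E1.
          case: (boolP (i < k)%N) => //= _. case: eqP => [->|//]. by rewrite Heq Rminus_diag Rmult_0_r.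
        by rewrite Ew ES.
      * have Hs : a i0 - ab i0 = s i0.
          rewrite /s. case: (Ha i0) => Hai; case: (Hab i0) => Habi; rewrite Hai Habi in Heq *; lra.
        have Ew : wk k.+1 = (fun i => wk k i + ep i0 i).
          apply: functional_extensionality => i. rewrite /wk /ep. have [E1 E2] := Hcase i. rewrite E1.
          case: (boolP (i < k)%N) => /= Hik.
          - by rewrite (negbTE (E2 Hik)) Rplus_0_r.
          - case: eqP => [->|_]; [by rewrite Hs; ring | ring].
        have ES : Sk k.+1 = Sk k + Ld i0.
          rewrite /Sk -(sumI_delta i0 (Ld i0)) -sumI_plus. apply: sumI_ext => i.
          have [E1 E2] := Hcase i. rewrite E1.
          case: (boolP (i < k)%N) => /= Hik.
          - by rewrite (negbTE (E2 Hik)) Rplus_0_r.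
          - case: eqP => [->|_]; last ring.
            rewrite Hs Rplus_0_l. have : s i0 * s i0 = 1 by rewrite /s; case: (Hab i0) => ->; ring.
            move=> Hss. rewrite Rmult_assoc (Rmult_comm (Ld i0)) -Rmult_assoc Hss; ring.
        have Hadm_sum : adm ab (fun i => wk k i + ep i0 i) by rewrite -Ew.
        have [L' HL'] := HasD_ex H Hconc Habox Hadm_sum J0.
        have EL := HasD_add H Habox (Hadm_w k) (Hadm_ep i0) Hadm_sum J0 IH' (HLd' i0) HL'.
        rewrite Ew ES -EL. exact: HL'.
  have HD := IND m (leqnn m).
  have Ewm : (fun i => ab i + 1 * wk m i) = a.
    apply: functional_extensionality => i. rewrite /wk ltn_ord. ring.
  have Jah' : Jhat X T x0 f r q (fun i => ab i + 1 * wk m i) va by rewrite Ewm.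
  have := HasD_ub H Hconc Habox (Hadm_w m) J0 HD (conj Rlt_0_1 (Rle_refl 1)) Jah'.
  have -> : Sk m = dotv (fun i => s i * Ld i) (vsub a ab).
    rewrite /Sk /dotv /vsub. apply: sumI_ext => i. by rewrite ltn_ord.
  have -> : (va - v0) / 1 = va - v0 by field.
  done.
Qed.
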